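(* Let $f:\mathbb{R}^{3}\to\mathbb{R}$ be quasi normal or quasi split normal. Then for all $x,y,z\in\mathbb{R}$ and $k_{1},k_{2},k_{3}\neq0$: (a) the limits $A(k_{1},y,z)=\lim_{r\to\infty}\int_{-r}^{r}f(x,y,z)e^{-ik_{1}x}dx$, $B(x,k_{2},z)=\lim_{r\to\infty}\int_{-r}^{r}f(x,y,z)e^{-ik_{2}y}dy$, $C(x,y,k_{3})=\lim_{r\to\infty}\int_{-r}^{r}f(x,y,z)e^{-ik_{3}z}dz$ all exist, and $(y,z)\mapsto A(k_{1},y,z)$, $(x,z)\mapsto B(x,k_{2},z)$, $(x,y)\mapsto C(x,y,k_{3})$ are of moderate decrease $3$; (b) the limits $F(k_{1},k_{2},z)=\lim_{r,s\to\infty}\int_{-r}^{r}\int_{-s}^{s}f(x,y,z)e^{-ik_{1}x}e^{-ik_{2}y}dxdy$, $G(k_{1},y,k_{3})=\lim_{r,s\to\infty}\int_{-r}^{r}\int_{-s}^{s}f(x,y,z)e^{-ik_{1}x}e^{-ik_{3}z}dxdz$, $H(x,k_{2},k_{3})=\lim_{r,s\to\infty}\int_{-r}^{r}\int_{-s}^{s}f(x,y,z)e^{-ik_{2}y}e^{-ik_{3}z}dydz$ all exist and are of moderate decrease in their remaining variable; (c) $F(k_{1},k_{2},z)=\int_{-\infty}^{\infty}A(k_{1},y,z)e^{-ik_{2}y}dy=\int_{-\infty}^{\infty}B(x,k_{2},z)e^{-ik_{1}x}dx$, $G(k_{1},y,k_{3})=\int_{-\infty}^{\infty}A(k_{1},y,z)e^{-ik_{3}z}dz=\int_{-\infty}^{\infty}C(x,y,k_{3})e^{-ik_{1}x}dx$,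 $H(x,k_{2},k_{3})=\int_{-\infty}^{\infty}B(x,k_{2},z)e^{-ik_{3}z}dz=\int_{-\infty}^{\infty}C(x,y,k_{3})e^{-ik_{2}y}dy$.
   Context: One-variable: a smooth $g:\mathbb{R}\setminus V\to\mathbb{R}$, $V$ bounded closed, is analytic at infinity if there exist $\epsilon_{1},\epsilon_{2}>0$ with $g(1/t)=\sum_{n\geq1}a_{n}t^{n}$ on $(0,\epsilon_{1})$ and $g(1/t)=\sum_{n\geq1}b_{n}t^{n}$ on $(-\epsilon_{2},0)$, real coefficients, both series absolutely convergent there. A one-variable function is of moderate decrease if $|g(t)|\leq C/t^{2}$ for $|t|>1$. Two variables: for smooth $h:\mathbb{R}^{2}\setminus W\to\mathbb{R}$, $W$ closed bounded: very moderate decrease means $|h(u,v)|\leq C/|(u,v)|$ for $|(u,v)|>1$; moderate decrease $n$ means $|h|\leq C/|(u,v)|^{n}$ for $|(u,v)|>1$ (moderate decrease means $n=2$). With fibres $h_{u}(v)=h(u,v)$, $h_{v}(u)=h(u,v)$: conditions (i) every $h_{u}$ analytic at infinity; (ii) every $h_{v}$ analytic at infinity; (iii) $h$ of very moderate decrease; (iv) $\partial h/\partial u$, $\partial h/\partial v$ of moderate decrease. $h$ is quasi normal if (i)–(iv) and (v)': for sufficiently large $u$ the zeros of $h_{u}$ lie in $(-M_{u},-N_{u})\cup(N_{u},M_{u})$ with $M_{u}-N_{u}$ uniformly bounded, likewise for $(h_{u})',(h_{u})''$ and for $h_{v},(h_{v})',(h_{v})''$. $h$ is quasi split normal if (i)–(iv)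 and (v)'': for sufficiently large $(u,v)$, $h=h_{1}+h_{2}$ with $h_{1},h_{2}$ quasi normal and $h,h_{1},h_{2}$ smooth. Three variables: smooth $f:\mathbb{R}^{3}\to\mathbb{R}$ is of very moderate decrease if $|f(x,y,z)|\leq C/|(x,y,z)|$ for $|(x,y,z)|>1$, of moderate decrease $n$ ($n\geq2$) if $|f|\leq C/|(x,y,z)|^{n}$ there. Fibres: $f_{x}(y,z)=f(x,y,z)$ etc., and $f_{x,y}(z)=f(x,y,z)$, $f_{x,z}(y)$, $f_{y,z}(x)$ similarly. Conditions: (iv) $f$ is of very moderate decrease; (v) for $i+j+k\geq1$, $\frac{\partial^{i+j+k}f}{\partial x^{i}\partial y^{j}\partial z^{k}}$ is of moderate decrease $i+j+k+1$. $f$ is quasi normal if all two-variable fibres $f_{x}(y,z)$, $f_{y}(x,z)$, $f_{z}(x,y)$ are quasi normal, (iv),(v) hold, and (vi)': for sufficiently large $(x,y)$, the zeros of $f_{x,y}$ and of its first four derivatives are contained in a finite union of $S$ intervals of total length $R$, with $S,R$ uniform in $(x,y)$, and similarly for $f_{x,z},f_{y,z}$. $f$ is quasi split normal if all two-variable fibres are quasi split normal, (iv),(v) hold, and (vi)'': for sufficiently large $(x,y)$, $f=f_{1}+f_{2}$ with $f,f_{1},f_{2}$ smooth and $f_{1},f_{2}$ having property (vi)'. *)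

(* Defs.v *)
From Stdlib Require Import Reals Lra List.
From Coquelicot Require Import Coquelicot.
Open Scope R_scope.

Definition norm2 (u v : R) : R := sqrt (u ^ 2 + v ^ 2).
Definition norm3 (x y z : R) : R := sqrt (x ^ 2 + y ^ 2 + z ^ 2).

Definition expi (t : R) : C := (cos t, sin t).

(** g : R \ V -> R (V bounded closed) analytic at infinity.  g is represented
    as a total function; only its values off V matter. *)
Definition analytic_at_infinity (V : R -> Prop) (g : R -> R) : Prop :=
  exists (e1 e2 : R) (a b : nat -> R), 0 < e1 /\ 0 < e2 /\
  (forall t, 0 < t < e1 ->
     ~ V (1 / t) /\
     ex_series (fun n => Rabs (a (S n) * t ^ (S n))) /\
     is_series (fun n => a (S n) * t ^ (S n)) (g (1 / t))) /\
  (forall t, - e2 < t < 0 ->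
     ~ V (1 / t) /\
     ex_series (fun n => Rabs (b (S n) * t ^ (S n))) /\
     is_series (fun n => b (S n) * t ^ (S n)) (g (1 / t))).

Definition moderate_decrease1 (g : R -> C) : Prop :=
  exists Cst : R, forall t, 1 < Rabs t -> Cmod (g t) <= Cst / t ^ 2.

Definition closed_bounded2 (W : R -> R -> Prop) : Prop :=
  closed (fun p : R * R => W (fst p) (snd p)) /\
  exists M, forall u v, W u v -> norm2 u v <= M.

Inductive dir2 := Du | Dv.

Definition pd2 (d : dir2) (h : R -> R -> R) : R -> R -> R :=
  match d with
  | Du => fun u v => Derive (fun t => h t v) u
  | Dv => fun u v => Derive (fun t => h u t) v
  end.

Definition iter_pd2 (l : list dir2) (h : R -> R -> R) : R -> R -> R :=
  fold_right pd2 h l.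

Definition smooth2 (W : R -> R -> Prop) (h : R -> R -> R) : Prop :=
  forall (l : list dir2) (u v : R), ~ W u v ->
    continuous (fun p : R * R => iter_pd2 l h (fst p) (snd p)) (u, v) /\
    ex_derive (fun t => iter_pd2 l h t v) u /\
    ex_derive (fun t => iter_pd2 l h u t) v.

Definition very_moderate_decrease2 (W : R -> R -> Prop) (h : R -> R -> R) : Prop :=
  exists Cst : R, forall u v, ~ W u v -> 1 < norm2 u v ->
    Rabs (h u v) <= Cst / norm2 u v.

Definition moderate_decrease2_n (n : nat) (W : R -> R -> Prop) (h : R -> R -> R)
  : Prop :=
  exists Cst : R, forall u v, ~ W u v -> 1 < norm2 u v ->
    Rabs (h u v) <= Cst / norm2 u v ^ n.

Definition zeros_in_sym_intervals (V : R -> Prop) (g : R -> R) (N M : R) : Prop :=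
  forall t, ~ V t -> g t = 0 -> (- M < t < - N \/ N < t < M).

Definition cond_v' (W : R -> R -> Prop) (h : R -> R -> R) : Prop :=
  exists U K : R,
    (forall u, U < Rabs u ->
       forall m : nat, (m <= 2)%nat ->
       exists N M, M - N <= K /\
         zeros_in_sym_intervals (fun v => W u v)
           (fun v => Derive_n (fun t => h u t) m v) N M) /\
    (forall v, U < Rabs v ->
       forall m : nat, (m <= 2)%nat ->
       exists N M, M - N <= K /\
         zeros_in_sym_intervals (fun u => W u v)
           (fun u => Derive_n (fun t => h t v) m u) N M).

Definition cond_i_iv (W : R -> R -> Prop) (h : R -> R -> R) : Prop :=
  (forall u, analytic_at_infinity (fun v => W u v) (fun v => h u v)) /\
  (forall v, analytic_at_infinity (fun u => W u v) (fun u => h u v)) /\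
  very_moderate_decrease2 W h /\
  moderate_decrease2_n 2 W (pd2 Du h) /\
  moderate_decrease2_n 2 W (pd2 Dv h).

Definition quasi_normal2 (W : R -> R -> Prop) (h : R -> R -> R) : Prop :=
  closed_bounded2 W /\ smooth2 W h /\ cond_i_iv W h /\ cond_v' W h.

Definition quasi_split_normal2 (W : R -> R -> Prop) (h : R -> R -> R) : Prop :=
  closed_bounded2 W /\ smooth2 W h /\ cond_i_iv W h /\
  exists (W1 W2 : R -> R -> Prop) (h1 h2 : R -> R -> R) (R0 : R),
    quasi_normal2 W1 h1 /\ quasi_normal2 W2 h2 /\
    forall u v, R0 < norm2 u v -> ~ W u v /\ ~ W1 u v /\ ~ W2 u v /\
      h u v = h1 u v + h2 u v.

Inductive dir3 := Dx | Dy | Dz.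

Definition pd3 (d : dir3) (f : R -> R -> R -> R) : R -> R -> R -> R :=
  match d with
  | Dx => fun x y z => Derive (fun t => f t y z) x
  | Dy => fun x y z => Derive (fun t => f x t z) y
  | Dz => fun x y z => Derive (fun t => f x y t) z
  end.

Definition iter_pd3 (l : list dir3) (f : R -> R -> R -> R) : R -> R -> R -> R :=
  fold_right pd3 f l.

Definition smooth3 (f : R -> R -> R -> R) : Prop :=
  forall (l : list dir3) (x y z : R),
    continuous (fun p : R * R * R => iter_pd3 l f (fst (fst p)) (snd (fst p)) (snd p))
      (x, y, z) /\
    ex_derive (fun t => iter_pd3 l f t y z) x /\
    ex_derive (fun t => iter_pd3 l f x t z) y /\
    ex_derive (fun t => iter_pd3 l f x y t) z.

Definition D3 (i j k : nat) (f : R -> R -> R -> R) : R -> R -> R -> R :=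
  Nat.iter i (pd3 Dx) (Nat.iter j (pd3 Dy) (Nat.iter k (pd3 Dz) f)).

Definition very_moderate_decrease3 (f : R -> R -> R -> R) : Prop :=
  exists Cst : R, forall x y z, 1 < norm3 x y z ->
    Rabs (f x y z) <= Cst / norm3 x y z.

Definition moderate_decrease3_n (n : nat) (f : R -> R -> R -> R) : Prop :=
  exists Cst : R, forall x y z, 1 < norm3 x y z ->
    Rabs (f x y z) <= Cst / norm3 x y z ^ n.

Definition cond_v3 (f : R -> R -> R -> R) : Prop :=
  forall i j k : nat, (1 <= i + j + k)%nat ->
    moderate_decrease3_n (i + j + k + 1) (D3 i j k f).

Definition zeros_covered (g : R -> R) (I : list (R * R)) : Prop :=
  forall (m : nat) (t : R), (m <= 4)%nat -> Derive_n g m t = 0 ->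
    exists ab, In ab I /\ fst ab <= t <= snd ab.

Fixpoint total_length (I : list (R * R)) : R :=
  match I with
  | nil => 0
  | ab :: I' => (snd ab - fst ab) + total_length I'
  end.

Definition zeros_in_S_intervals (g : R -> R) (S : nat) (Rt : R) : Prop :=
  exists I : list (R * R),
    (length I <= S)%nat /\ (forall ab, In ab I -> fst ab <= snd ab) /\
    total_length I <= Rt /\ zeros_covered g I.

Definition cond_vi' (f : R -> R -> R -> R) : Prop :=
  exists (R0 : R) (S : nat) (Rt : R),
    (forall x y, R0 < norm2 x y -> zeros_in_S_intervals (fun z => f x y z) S Rt) /\
    (forall x z, R0 < norm2 x z -> zeros_in_S_intervals (fun y => f x y z) S Rt) /\
    (forall y z, R0 < norm2 y z -> zeros_in_S_intervals (fun x => f x y z) S Rt).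

Definition noW : R -> R -> Prop := fun _ _ => False.

Definition quasi_normal3 (f : R -> R -> R -> R) : Prop :=
  smooth3 f /\
  (forall x, quasi_normal2 noW (fun y z => f x y z)) /\
  (forall y, quasi_normal2 noW (fun x z => f x y z)) /\
  (forall z, quasi_normal2 noW (fun x y => f x y z)) /\
  very_moderate_decrease3 f /\ cond_v3 f /\ cond_vi' f.

Definition split_vi' (f f1 f2 : R -> R -> R -> R) : Prop :=
  smooth3 f1 /\ smooth3 f2 /\ cond_vi' f1 /\ cond_vi' f2.

Definition cond_vi'' (f : R -> R -> R -> R) : Prop :=
  (exists f1 f2 R0, split_vi' f f1 f2 /\
     forall x y z, R0 < norm2 x y -> f x y z = f1 x y z + f2 x y z) /\
  (exists f1 f2 R0, split_vi' f f1 f2 /\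
     forall x y z, R0 < norm2 x z -> f x y z = f1 x y z + f2 x y z) /\
  (exists f1 f2 R0, split_vi' f f1 f2 /\
     forall x y z, R0 < norm2 y z -> f x y z = f1 x y z + f2 x y z).

Definition quasi_split_normal3 (f : R -> R -> R -> R) : Prop :=
  smooth3 f /\
  (forall x, quasi_split_normal2 noW (fun y z => f x y z)) /\
  (forall y, quasi_split_normal2 noW (fun x z => f x y z)) /\
  (forall z, quasi_split_normal2 noW (fun x y => f x y z)) /\
  very_moderate_decrease3 f /\ cond_v3 f /\ cond_vi'' f.

Definition ft_lim1 (g : R -> R) (k : R) (L : C) : Prop :=
  filterlim (fun r => RInt (V := C_R_CompleteNormedModule)
                        (fun t => Cmult (RtoC (g t)) (expi (- (k * t)))) (- r) r)
    (Rbar_locally p_infty) (locally L).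

Definition ft_lim2 (g : R -> R -> R) (k l : R) (L : C) : Prop :=
  filterlim (fun rs : R * R =>
      RInt (V := C_R_CompleteNormedModule)
        (fun b => RInt (V := C_R_CompleteNormedModule)
           (fun a => Cmult (Cmult (RtoC (g a b)) (expi (- (k * a)))) (expi (- (l * b))))
           (- snd rs) (snd rs))
        (- fst rs) (fst rs))
    (filter_prod (Rbar_locally p_infty) (Rbar_locally p_infty)) (locally L).

Definition ft_int (g : R -> C) (k : R) (L : C) : Prop :=
  is_RInt_gen (V := C_R_NormedModule) (fun t => Cmult (g t) (expi (- (k * t))))
    (Rbar_locally m_infty) (Rbar_locally p_infty) L.

Definition moderate_decrease2C (n : nat) (h : R -> R -> C) : Prop :=
  exists Cst : R, forall u v, 1 < norm2 u v -> Cmod (h u v) <= Cst / norm2 u v ^ n.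

(* Main.v *)
Require Import Defs.
From Stdlib Require Import Reals Lra Lia List FunctionalExtensionality IndefiniteDescription.
From Coquelicot Require Import Coquelicot.
Open Scope R_scope.

Notation CV := C_R_CompleteNormedModule.

Ltac csimp := unfold minus, plus, opp, scal, zero; simpl; unfold prod_plus, prod_opp, prod_scal, prod_zero; simpl; unfold plus, opp, scal, mult, zero; simpl; unfold Cplus, Copp, Cminus, Cmult, RtoC; simpl; unfold mult; simpl.

Lemma normC (a b : R) : @norm _ CV ((a,b) : C) = sqrt (a^2 + b^2).
Proof.
  unfold norm; simpl; unfold prod_norm; simpl. unfold norm; simpl. unfold abs; simpl.
  f_equal. rewrite !Rmult_1_r. rewrite <- !Rabs_mult.
  rewrite (Rabs_right (a*a)) by nra. rewrite (Rabs_right (b*b)) by nra. reflexivity.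
Qed.

Lemma normC_le (z : C) (K : R) : Rabs (fst z) <= K -> Rabs (snd z) <= K -> @norm _ CV z <= sqrt 2 * K.
Proof.
  destruct z as [a b]; simpl; intros Ha Hb. rewrite normC.
  assert (HK : 0 <= K) by (eapply Rle_trans; [apply Rabs_pos| exact Ha]).
  replace (sqrt 2 * K) with (sqrt (2 * K^2)).
  2:{ rewrite sqrt_mult by nra. rewrite sqrt_pow2 by lra. reflexivity. }
  apply sqrt_le_1_alt.
  assert (a^2 <= K^2). { rewrite <- (pow2_abs a). apply pow_incr; split; [apply Rabs_pos|exact Ha]. }
  assert (b^2 <= K^2). { rewrite <- (pow2_abs b). apply pow_incr; split; [apply Rabs_pos|exact Hb]. }
  lra.
Qed.

Lemma is_derive_pairC (p q : R -> R) (t dp dq : R) :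
  is_derive p t dp -> is_derive q t dq ->
  is_derive (V := C_R_NormedModule) (fun s => ((p s, q s) : C)) t ((dp, dq) : C).
Proof.
  intros Hp Hq. unfold is_derive.
  apply (filterdiff_comp_2 (K := R_AbsRing) (U := R_NormedModule) (V := R_NormedModule)
     (W := C_R_NormedModule) p q (fun u v => (u, v)) (fun y => scal y dp) (fun y => scal y dq)
     (fun u v => (u, v))); try assumption.
  apply filterdiff_linear.
  apply (is_linear_prod (K := R_AbsRing) (T := prod_NormedModule R_AbsRing R_NormedModule R_NormedModule)
    (U := R_NormedModule) (V := R_NormedModule) (fun t => fst t) (fun t => snd t)).
  apply is_linear_fst. apply is_linear_snd.
Qed.

Lemma continuous_pairC {U : UniformSpace} (p q : U -> R) (t : U) :
  continuous p t -> continuous q t -> continuous (fun s => ((p s, q s) : C)) t.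
Proof.
  intros Hp Hq.
  apply (continuous_comp_2 (V := R_UniformSpace) (W := R_UniformSpace) (X := CV) p q (fun u v => ((u, v) : C))); auto.
  apply continuous_ext with (f := fun x : R * R => x). intros [a b]; reflexivity.
  apply continuous_id.
Qed.

Definition cex (u : R -> R) (k t : R) : C := (u t * cos (k*t), - (u t * sin (k*t))).
Definition cE (u : R -> R) (k t : R) : C := (u t * sin (k*t) / k, u t * cos (k*t) / k).
Definition bet (u u1 u2 : R -> R) (k t : R) : C :=
  (u t * sin (k*t)/k + u1 t * cos (k*t)/k^2 - u2 t * sin (k*t)/k^3,
   u t * cos (k*t)/k - u1 t * sin (k*t)/k^2 - u2 t * cos (k*t)/k^3).

Lemma cont_mul (u v : R -> R) t : continuous u t -> continuous v t -> continuous (fun s => u s * v s) t.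
Proof. intros Hu Hv. apply (continuous_mult (K := R_AbsRing) u v t Hu Hv). Qed.

Lemma cont_cos k t : continuous (fun s => cos (k*s)) t.
Proof. apply continuous_cos_comp. apply (ex_derive_continuous (K:=R_AbsRing) (V:=R_NormedModule) (fun s => k*s)). auto_derive. auto. Qed.
Lemma cont_sin k t : continuous (fun s => sin (k*s)) t.
Proof. apply continuous_sin_comp. apply (ex_derive_continuous (K:=R_AbsRing) (V:=R_NormedModule) (fun s => k*s)). auto_derive. auto. Qed.

Lemma cont_cex u k t : continuous u t -> continuous (cex u k) t.
Proof.
  intros Hu. unfold cex. apply continuous_pairC.
  - apply cont_mul; auto. apply cont_cos.
  - apply (continuous_opp (V := R_NormedModule) (fun s => u s * sin (k*s))). apply cont_mul; auto. apply cont_sin.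
Qed.

Lemma cont_cE u k t : continuous u t -> continuous (cE u k) t.
Proof.
  intros Hu. unfold cE. apply continuous_pairC.
  - apply cont_mul. apply cont_mul; auto. apply cont_sin. apply continuous_const.
  - apply cont_mul. apply cont_mul; auto. apply cont_cos. apply continuous_const.
Qed.

Lemma Der_eq (u du : R -> R) : (forall t, is_derive u t (du t)) -> forall t, Derive (fun x => u x) t = du t.
Proof. intros H t. apply is_derive_unique. apply H. Qed.

Lemma cont_of_der (u du : R -> R) : (forall t, is_derive u t (du t)) -> forall t, continuous u t.
Proof. intros H t. apply (ex_derive_continuous (K:=R_AbsRing) (V:=R_NormedModule) u). eexists; apply H. Qed.

Lemma ibp3 (u u1 u2 u3 : R -> R) (k a b : R) : k <> 0 ->
  (forall t, is_derive u t (u1 t)) -> (forall t, is_derive u1 t (u2 t)) ->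
  (forall t, is_derive u2 t (u3 t)) -> (forall t, continuous u3 t) ->
  is_RInt (V := CV) (fun t => minus (cex u k t) (scal (/ k^2) (cE u3 k t))) a b
    (minus (bet u u1 u2 k b) (bet u u1 u2 k a)).
Proof.
  intros Hk H0 H1 H2 H3.
  apply (is_RInt_derive (V := CV) (bet u u1 u2 k)).
  - intros x _. unfold bet.
    match goal with |- is_derive _ _ ?l => replace l with
      (((u1 x * sin (k*x)/k + u x * cos (k*x) + (u2 x * cos (k*x)/k^2 - u1 x * sin(k*x)/k))
        - (u3 x * sin (k*x)/k^3 + u2 x * cos (k*x) /k^2),
       (u1 x * cos (k*x)/k - u x * sin (k*x)) - (u2 x * sin (k*x)/k^2 + u1 x * cos(k*x)/k)
        - (u3 x * cos (k*x)/k^3 - u2 x * sin (k*x)/k^2)) : C) end.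
    2:{ unfold cex, cE. csimp. f_equal; field; auto. }
    apply is_derive_pairC.
    + auto_derive.
      * repeat split; eexists; eauto.
      * rewrite (Der_eq u u1 H0), (Der_eq u1 u2 H1), (Der_eq u2 u3 H2). field; auto.
    + auto_derive.
      * repeat split; eexists; eauto.
rewrite (Der_eq u u1 H0), (Der_eq u1 u2 H1), (Der_eq u2 u3 H2). field; auto.
  - intros x _. apply (continuous_minus (V := CV)).
    + apply cont_cex. eapply cont_of_der; eauto.
    + apply (continuous_scal (V := CV) (fun _ => / k^2)). apply continuous_const. apply cont_cE; auto.
Qed.

Lemma inv_sq_int (M a b : R) : (0 < a \/ b < 0) -> a <= b ->
  is_RInt (fun t => M / t^2) a b (M/a - M/b).
Proof.
  intros Hab Hle.
  replace (M/a - M/b) with (minus (- M / b) (- M / a)).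
  2:{ unfold minus, plus, opp; simpl. field. split; intro; subst; lra. }
  apply (is_RInt_derive (fun t => - M / t)).
  - intros x Hx. rewrite Rmin_left in Hx by lra. rewrite Rmax_right in Hx by lra.
    assert (x <> 0) by lra.
    auto_derive; repeat split; auto; try (field; auto).
  - intros x Hx. rewrite Rmin_left in Hx by lra. rewrite Rmax_right in Hx by lra.
    assert (x <> 0) by lra.
    apply (ex_derive_continuous (K:=R_AbsRing) (V:=R_NormedModule) (fun t => M / t^2)).
    auto_derive; repeat split; auto; apply pow_nonzero; auto.
Qed.

Lemma norm_RInt_le' (h : R -> C) (g : R -> R) a b lg : a <= b -> ex_RInt (V:=CV) h a b ->
  (forall t, a <= t <= b -> @norm _ CV (h t) <= g t) -> is_RInt g a b lg ->
  @norm _ CV (RInt (V:=CV) h a b) <= lg.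
Proof.
  intros Hab Hex Hb Hg. apply (norm_RInt_le (V:=CV) h g a b); auto. apply RInt_correct; auto.
Qed.

Lemma M_nonneg (h : R -> C) M T : 0 < T -> @norm _ CV (h T) <= M / T^2 -> 0 <= M.
Proof.
  intros HT H. pose proof (norm_ge_0 (V:=CV) (h T)).
  assert (0 <= M / T^2) by lra.
  assert (0 < T^2) by (apply pow_lt; auto).
  replace M with ((M / T^2) * T^2) by (field; lra). nra.
Qed.

Lemma tailR (h : R -> C) M T b : 0 < T -> T <= b -> ex_RInt (V:=CV) h T b ->
  (forall t, T <= t -> @norm _ CV (h t) <= M / t^2) -> @norm _ CV (RInt (V:=CV) h T b) <= M / T.
Proof.
  intros HT Hb Hex Hh.
  assert (HM : 0 <= M) by (apply (M_nonneg h M T); auto; apply Hh; lra).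
  eapply Rle_trans.
  apply (norm_RInt_le' h (fun t => M / t^2) T b (M/T - M/b)); auto.
  intros; apply Hh; lra. apply inv_sq_int; lra.
  assert (0 <= M / b) by (apply Rdiv_le_0_compat; lra). lra.
Qed.

Lemma tailL (h : R -> C) M T a : 0 < T -> a <= - T -> ex_RInt (V:=CV) h a (- T) ->
  (forall t, t <= - T -> @norm _ CV (h t) <= M / t^2) -> @norm _ CV (RInt (V:=CV) h a (- T)) <= M / T.
Proof.
  intros HT Ha Hex Hh.
  assert (HM : 0 <= M).
  { apply (M_nonneg (fun t => h (- t)) M T); auto. replace (T^2) with ((-T)^2) by ring. apply Hh; lra. }
  eapply Rle_trans.
  apply (norm_RInt_le' h (fun t => M / t^2) a (- T) (M/a - M/(-T))); auto.
  intros; apply Hh; lra. apply inv_sq_int; lra.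
  assert (M / a <= 0). { unfold Rdiv. assert (/ a < 0) by (apply Rinv_lt_0_compat; lra). nra. }
  replace (M / (- T)) with (- (M / T)) by (field; lra). lra.
Qed.

Lemma C_split3 (A m B : C) : @minus CV (@plus CV A (@plus CV m B)) m = @plus CV A B.
Proof. destruct A, m, B. csimp. f_equal; ring. Qed.

Lemma norm_minus_le (x y : C) : @norm _ CV (@minus CV x y) <= @norm _ CV x + @norm _ CV y.
Proof.
  unfold minus. eapply Rle_trans. apply (norm_triangle (K:=R_AbsRing) (V:=CV)). rewrite (norm_opp (K:=R_AbsRing) (V:=CV)). lra.
Qed.

Lemma norm_minus_sym (x y : C) : @norm _ CV (@minus CV x y) = @norm _ CV (@minus CV y x).
Proof.
  rewrite <- (norm_opp (K:=R_AbsRing) (V:=CV)). f_equal. destruct x, y; csimp. f_equal; ring.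
Qed.

Lemma norm_tri3 (x y z : C) : @norm _ CV (@minus CV x z) <= @norm _ CV (@minus CV x y) + @norm _ CV (@minus CV y z).
Proof.
  replace (@minus CV x z) with (@plus CV (@minus CV x y) (@minus CV y z)).
  apply (norm_triangle (K:=R_AbsRing) (V:=CV)). destruct x, y, z; csimp; f_equal; ring.
Qed.

Lemma RInt_split3 (h : R -> C) a b T : a <= -T -> 0 < T -> T <= b -> (forall a b, ex_RInt (V:=CV) h a b) ->
  RInt (V:=CV) h a b = @plus CV (RInt (V:=CV) h a (-T)) (@plus CV (RInt (V:=CV) h (-T) T) (RInt (V:=CV) h T b)).
Proof.
  intros Ha HT Hb Hex.
  rewrite (RInt_Chasles (V:=CV) h (-T) T b); auto.
  rewrite (RInt_Chasles (V:=CV) h a (-T) b); auto.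
Qed.

Lemma improper_exists (h : R -> C) M T : 0 < T -> (forall a b, ex_RInt (V:=CV) h a b) ->
  (forall t, T <= Rabs t -> @norm _ CV (h t) <= M / t^2) ->
  exists L, is_RInt_gen (V:=CV) h (Rbar_locally m_infty) (Rbar_locally p_infty) L.
Proof.
  intros HT Hex Hb.
  assert (HM : 0 <= M).
  { apply (M_nonneg h M T); auto. apply Hb. rewrite Rabs_right; lra. }
  assert (HL : exists L, filterlim (fun ab : R * R => RInt (V:=CV) h (fst ab) (snd ab))
            (filter_prod (Rbar_locally m_infty) (Rbar_locally p_infty)) (locally L)).
  { refine (proj1 (@Hierarchy.filterlim_locally_cauchy _ CV _
       (@Hierarchy.filter_prod_proper _ _ _ _ (Rbar_locally_filter _) (Rbar_locally_filter _)) _) _).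
    intros eps.
    set (T' := Rmax T (4 * M / eps + 1)).
    assert (HT'1 : T <= T') by apply Rmax_l.
    assert (HT'2 : 4 * M / eps + 1 <= T') by apply Rmax_r.
    assert (HT'0 : 0 < T') by lra.
    exists (fun ab : R * R => fst ab <= - T' /\ T' <= snd ab).
    split.
    - apply (Filter_prod _ _ _ (fun a => a <= - T') (fun b => T' <= b)).
      + exists (- T'). intros; lra.
      + exists T'. intros; lra.
      + intros; simpl; auto.
    - intros [a b] [a' b'] [Ha Hb'] [Ha' Hb'']. simpl in *.
      apply (norm_compat1 (K:=R_AbsRing) (V:=CV)).
      assert (Hbnd : forall a b, a <= - T' -> T' <= b ->
         @norm _ CV (@minus CV (RInt (V:=CV) h a b) (RInt (V:=CV) h (-T') T')) <= 2 * M / T').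
      { intros a0 b0 Ha0 Hb0. rewrite (RInt_split3 h a0 b0 T'); auto. rewrite C_split3.
        eapply Rle_trans. apply (norm_triangle (K:=R_AbsRing) (V:=CV)).
        assert (@norm _ CV (RInt (V:=CV) h a0 (- T')) <= M / T').
        { apply tailL; auto. intros t Ht. apply Hb. rewrite Rabs_left; lra. }
        assert (@norm _ CV (RInt (V:=CV) h T' b0) <= M / T').
        { apply tailR; auto. intros t Ht. apply Hb. rewrite Rabs_right; lra. }
        unfold Rdiv in *. lra. }
      eapply Rle_lt_trans. apply (norm_tri3 _ (RInt (V:=CV) h (-T') T')).
      rewrite (norm_minus_sym (RInt (V:=CV) h (-T') T')).
      pose proof (Hbnd a b Ha Hb'). pose proof (Hbnd a' b' Ha' Hb'').
      assert (2 * M / T' + 2 * M / T' < eps).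
      { replace (2 * M / T' + 2 * M / T') with (4 * M / T') by (field; lra).
        destruct eps as [e He]; simpl in *.
        apply (Rmult_lt_reg_r T'); auto. unfold Rdiv. rewrite Rmult_assoc, Rinv_l, Rmult_1_r by lra.
        assert (4 * M / e * e = 4 * M) by (field; lra). nra. }
      lra. }
  destruct HL as [L HL]. exists L.
  intros P HP. specialize (HL P HP).
  unfold filtermapi. eapply filter_imp. 2: exact HL.
  intros [a b] Hab. exists (RInt (V:=CV) h a b). split; auto. apply RInt_correct. auto.
Qed.

Lemma lim_eps (f : R -> C) L : filterlim f (Rbar_locally p_infty) (locally (T := CV) L) ->
  forall eps, 0 < eps -> exists R0, forall r, R0 < r -> @norm _ CV (@minus CV (f r) L) < eps.
Proof.
  intros H eps Heps.
  assert (Hnf : 0 < @norm_factor _ CV) by apply norm_factor_gt_0.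
  set (e := mkposreal (eps / @norm_factor _ CV) ltac:(apply Rdiv_lt_0_compat; auto)).
  pose proof (proj1 (filterlim_locally (F := Rbar_locally p_infty) (U := CV) f L) H e) as He.
  destruct He as [R0 HR0]. exists R0. intros r Hr.
  pose proof (norm_compat2 (K:=R_AbsRing) (V:=CV) L (f r) e (HR0 r Hr)) as Hn.
  simpl in Hn. replace eps with (@norm_factor _ CV * (eps / @norm_factor _ CV)) by (field; lra). exact Hn.
Qed.

Lemma lim_of_eps (f : R -> C) L :
  (forall eps, 0 < eps -> exists R0, forall r, R0 < r -> @norm _ CV (@minus CV (f r) L) < eps) ->
  filterlim f (Rbar_locally p_infty) (locally (T := CV) L).
Proof.
  intros H. apply (proj2 (filterlim_locally (F := Rbar_locally p_infty) (U := CV) f L)).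
  intros e. destruct (H e (cond_pos e)) as [R0 HR0]. exists R0. intros r Hr.
  apply (norm_compat1 (K:=R_AbsRing) (V:=CV)). auto.
Qed.

Lemma lim_norm_le (f : R -> C) L c B r0 : filterlim f (Rbar_locally p_infty) (locally (T := CV) L) ->
  (forall r, r0 <= r -> @norm _ CV (@minus CV (f r) c) <= B) -> @norm _ CV (@minus CV L c) <= B.
Proof.
  intros Hf Hb.
  apply Rnot_lt_le. intro Hlt.
  set (eps := @norm _ CV (@minus CV L c) - B).
  destruct (lim_eps f L Hf eps) as [R0 HR0]. unfold eps; lra.
  set (r := Rmax (R0 + 1) r0).
  assert (H1 : R0 < r) by (unfold r; pose proof (Rmax_l (R0+1) r0); lra).
  assert (H2 : r0 <= r) by (unfold r; apply Rmax_r).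
  pose proof (HR0 r H1). pose proof (Hb r H2).
  pose proof (norm_tri3 L (f r) c). rewrite norm_minus_sym in H. unfold eps in *. lra.
Qed.

Lemma gen_sym (h : R -> C) L : is_RInt_gen (V:=CV) h (Rbar_locally m_infty) (Rbar_locally p_infty) L ->
  filterlim (fun r => RInt (V:=CV) h (- r) r) (Rbar_locally p_infty) (locally (T := CV) L).
Proof.
  intros H P HP. specialize (H P HP). unfold filtermapi in H.
  destruct H as [Q R HQ HR HQR]. destruct HQ as [M1 HM1]. destruct HR as [M2 HM2].
  exists (Rmax (- M1) M2). intros r Hr.
  assert (Q (- r)). { apply HM1. pose proof (Rmax_l (- M1) M2). lra. }
  assert (R r). { apply HM2. pose proof (Rmax_r (- M1) M2). lra. }
  destruct (HQR (- r) r H H0) as [y [Hy Py]]. simpl in Hy.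
  rewrite (is_RInt_unique _ _ _ _ Hy). exact Py.
Qed.

Lemma improper_tail (h : R -> C) L M s : 0 < s -> (forall a b, ex_RInt (V:=CV) h a b) ->
  is_RInt_gen (V:=CV) h (Rbar_locally m_infty) (Rbar_locally p_infty) L ->
  (forall t, s <= Rabs t -> @norm _ CV (h t) <= M / t^2) ->
  @norm _ CV (@minus CV L (RInt (V:=CV) h (- s) s)) <= 2 * M / s.
Proof.
  intros Hs Hex HL Hb.
  apply (lim_norm_le _ L _ _ s (gen_sym h L HL)).
  intros r Hr.
  rewrite (RInt_split3 h (- r) r s); try lra; auto.
  replace (@minus CV (@plus CV (RInt (V:=CV) h (- r) (- s)) (@plus CV (RInt (V:=CV) h (- s) s) (RInt (V:=CV) h s r)))
    (RInt (V:=CV) h (- s) s)) with (@plus CV (RInt (V:=CV) h (- r) (- s)) (RInt (V:=CV) h s r)).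
  2:{ rewrite C_split3. reflexivity. }
  eapply Rle_trans. apply (norm_triangle (K:=R_AbsRing) (V:=CV)).
  assert (@norm _ CV (RInt (V:=CV) h (- r) (- s)) <= M / s).
  { apply tailL; auto; try lra. intros t Ht. apply Hb. rewrite Rabs_left; lra. }
  assert (@norm _ CV (RInt (V:=CV) h s r) <= M / s).
  { apply tailR; auto. intros t Ht. apply Hb. rewrite Rabs_right; lra. }
  unfold Rdiv in *; lra.
Qed.

Lemma abs_trig_div (a s c : R) : Rabs s <= 1 -> c <> 0 -> Rabs (a * s / c) <= Rabs a / Rabs c.
Proof.
  intros Hs Hc. unfold Rdiv. rewrite !Rabs_mult, Rabs_inv.
  assert (0 < / Rabs c) by (apply Rinv_0_lt_compat; apply Rabs_pos_lt; auto).
  pose proof (Rabs_pos a). pose proof (Rabs_pos s).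
  apply Rmult_le_compat_r. lra. rewrite <- (Rmult_1_r (Rabs a)) at 2. apply Rmult_le_compat_l; auto.
Qed.

Lemma abs_sin x : Rabs (sin x) <= 1.
Proof. apply Rabs_le. apply SIN_bound. Qed.
Lemma abs_cos x : Rabs (cos x) <= 1.
Proof. apply Rabs_le. apply COS_bound. Qed.

Lemma norm_cex_le u k t : @norm _ CV (cex u k t) <= sqrt 2 * Rabs (u t).
Proof.
  unfold cex. apply normC_le; simpl.
  - rewrite Rabs_mult. pose proof (abs_cos (k*t)). pose proof (Rabs_pos (u t)). nra.
  - rewrite Rabs_Ropp, Rabs_mult. pose proof (abs_sin (k*t)). pose proof (Rabs_pos (u t)). nra.
Qed.

Lemma norm_cE_le u k t : k <> 0 -> @norm _ CV (cE u k t) <= sqrt 2 * (Rabs (u t) / Rabs k).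
Proof.
  intros Hk. unfold cE. apply normC_le; simpl; apply abs_trig_div; auto using abs_sin, abs_cos.
Qed.

Lemma abs3a x y z : Rabs (x + y - z) <= Rabs x + Rabs y + Rabs z.
Proof.
  unfold Rminus. eapply Rle_trans. apply Rabs_triang. rewrite Rabs_Ropp.
  pose proof (Rabs_triang x y). lra.
Qed.
Lemma abs3b x y z : Rabs (x - y - z) <= Rabs x + Rabs y + Rabs z.
Proof.
  unfold Rminus. eapply Rle_trans. apply Rabs_triang. rewrite Rabs_Ropp.
  pose proof (Rabs_triang x (-y)). rewrite Rabs_Ropp in H. lra.
Qed.

Lemma norm_bet_le u u1 u2 k t : k <> 0 ->
  @norm _ CV (bet u u1 u2 k t) <= sqrt 2 * (Rabs (u t) / Rabs k + Rabs (u1 t) / Rabs (k^2) + Rabs (u2 t) / Rabs (k^3)).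
Proof.
  intros Hk. assert (k^2 <> 0) by (apply pow_nonzero; auto). assert (k^3 <> 0) by (apply pow_nonzero; auto).
  unfold bet. apply normC_le; cbn [fst snd].
  - eapply Rle_trans. apply abs3a.
    pose proof (abs_trig_div (u t) (sin (k*t)) k (abs_sin _) Hk).
    pose proof (abs_trig_div (u1 t) (cos (k*t)) (k^2) (abs_cos _) H).
    pose proof (abs_trig_div (u2 t) (sin (k*t)) (k^3) (abs_sin _) H0). lra.
  - eapply Rle_trans. apply abs3b.
    pose proof (abs_trig_div (u t) (cos (k*t)) k (abs_cos _) Hk).
    pose proof (abs_trig_div (u1 t) (sin (k*t)) (k^2) (abs_sin _) H).
    pose proof (abs_trig_div (u2 t) (cos (k*t)) (k^3) (abs_cos _) H0). lra.
Qed.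

Lemma ex_RInt_cont (h : R -> C) a b : (forall t, continuous h t) -> ex_RInt (V:=CV) h a b.
Proof. intros H. apply (ex_RInt_continuous (V:=CV)). intros; apply H. Qed.

Lemma cex_decomp (u u1 u2 u3 : R -> R) (k a b : R) : k <> 0 ->
  (forall t, is_derive u t (u1 t)) -> (forall t, is_derive u1 t (u2 t)) ->
  (forall t, is_derive u2 t (u3 t)) -> (forall t, continuous u3 t) ->
  RInt (V:=CV) (cex u k) a b =
  @plus CV (@minus CV (bet u u1 u2 k b) (bet u u1 u2 k a)) (@scal _ CV (/ k^2) (RInt (V:=CV) (cE u3 k) a b)).
Proof.
  intros Hk H0 H1 H2 H3. apply is_RInt_unique.
  eapply (is_RInt_ext (V:=CV)). 2:{ apply (is_RInt_plus (V:=CV)). apply ibp3; eauto.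
    apply (is_RInt_scal (V:=CV)). apply RInt_correct. apply ex_RInt_cont. intros; apply cont_cE; auto. }
  intros x _. simpl. destruct (cex u k x), (cE u3 k x). csimp. f_equal; ring.
Qed.

Lemma norm_scal_C (l : R) (x : C) : @norm _ CV (@scal _ CV l x) <= Rabs l * @norm _ CV x.
Proof. apply (norm_scal (K:=R_AbsRing) (V:=CV)). Qed.

Lemma C_alg1 (D I L : C) c : @minus CV (@plus CV D (@scal _ CV c I)) (@scal _ CV c L) = @plus CV D (@scal _ CV c (@minus CV I L)).
Proof. destruct D, I, L. csimp. f_equal; ring. Qed.

Lemma FT1 (u u1 u2 u3 : R -> R) (k M T : R) : k <> 0 -> 0 < T ->
  (forall t, is_derive u t (u1 t)) -> (forall t, is_derive u1 t (u2 t)) ->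
  (forall t, is_derive u2 t (u3 t)) -> (forall t, continuous u3 t) ->
  (forall t, T <= Rabs t -> Rabs (u t) <= M / Rabs t /\ Rabs (u1 t) <= M / Rabs t /\
        Rabs (u2 t) <= M / Rabs t /\ Rabs (u3 t) <= M / t^2) ->
  exists Lam, is_RInt_gen (V:=CV) (cE u3 k) (Rbar_locally m_infty) (Rbar_locally p_infty) Lam /\
    filterlim (fun r => RInt (V:=CV) (cex u k) (- r) r) (Rbar_locally p_infty) (locally (T:=CV) (@scal _ CV (/ k^2) Lam)).
Proof.
  intros Hk HT H0 H1 H2 H3 Hb.
  assert (HM : 0 <= M).
  { assert (HTT : T <= Rabs T) by (rewrite Rabs_right; lra).
    destruct (Hb T HTT) as [Hu _]. rewrite (Rabs_right T) in Hu by lra.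
    pose proof (Rabs_pos (u T)). assert (0 <= M / T) by lra.
    replace M with (M / T * T) by (field; lra). nra. }
  assert (Hk' : 0 < Rabs k) by (apply Rabs_pos_lt; auto).
  assert (Hex : forall a b, ex_RInt (V:=CV) (cE u3 k) a b) by (intros; apply ex_RInt_cont; intros; apply cont_cE; auto).
  destruct (improper_exists (cE u3 k) (sqrt 2 * M / Rabs k) T HT Hex) as [Lam HLam].
  { intros t Ht. eapply Rle_trans. apply norm_cE_le; auto.
    destruct (Hb t Ht) as [_ [_ [_ H4]]].
    assert (0 < sqrt 2) by (apply sqrt_lt_R0; lra).
    replace (sqrt 2 * M / Rabs k / t^2) with (sqrt 2 * ((M / t^2) / Rabs k)) by (field; split; lra || (intro; subst; rewrite Rabs_R0 in Ht; lra)).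
    apply Rmult_le_compat_l. lra. unfold Rdiv. apply Rmult_le_compat_r. left; apply Rinv_0_lt_compat; auto. exact H4. }
  exists Lam. split; auto.
  apply lim_of_eps. intros eps Heps.
  assert (Hk2 : 0 < k^2) by (apply pow2_gt_0; auto).
  destruct (lim_eps _ _ (gen_sym _ _ HLam) (eps * k^2 / 2)) as [R1 HR1].
  { apply Rdiv_lt_0_compat; [apply Rmult_lt_0_compat|]; lra. }
  set (K0 := sqrt 2 * (M / Rabs k + M / Rabs (k^2) + M / Rabs (k^3))).
  assert (HK0 : 0 <= K0).
  { unfold K0. apply Rmult_le_pos. apply sqrt_pos.
    assert (0 < Rabs (k^2)) by (apply Rabs_pos_lt; apply pow_nonzero; auto).
    assert (0 < Rabs (k^3)) by (apply Rabs_pos_lt; apply pow_nonzero; auto).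
    repeat apply Rplus_le_le_0_compat; apply Rdiv_le_0_compat; lra. }
  exists (Rmax T (Rmax R1 (4 * K0 / eps + 1))).
  intros r Hr.
  assert (HrT : T < r) by (pose proof (Rmax_l T (Rmax R1 (4 * K0 / eps + 1))); lra).
  assert (HrR1 : R1 < r) by (pose proof (Rmax_r T (Rmax R1 (4 * K0 / eps + 1))); pose proof (Rmax_l R1 (4 * K0 / eps + 1)); lra).
  assert (HrK : 4 * K0 / eps + 1 < r) by (pose proof (Rmax_r T (Rmax R1 (4 * K0 / eps + 1))); pose proof (Rmax_r R1 (4 * K0 / eps + 1)); lra).
  rewrite cex_decomp with (u1 := u1) (u2 := u2) (u3 := u3); auto.
  rewrite C_alg1.
  assert (Hbet : forall t, T <= Rabs t -> @norm _ CV (bet u u1 u2 k t) <= K0 / Rabs t).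
  { intros t Ht. eapply Rle_trans. apply norm_bet_le; auto.
    destruct (Hb t Ht) as [Hu [Hu1 [Hu2 _]]].
    assert (0 < Rabs t) by lra.
    assert (0 < Rabs (k^2)) by (apply Rabs_pos_lt; apply pow_nonzero; auto).
    assert (0 < Rabs (k^3)) by (apply Rabs_pos_lt; apply pow_nonzero; auto).
    unfold K0. replace (sqrt 2 * (M / Rabs k + M / Rabs (k ^ 2) + M / Rabs (k ^ 3)) / Rabs t)
      with (sqrt 2 * ((M / Rabs t) / Rabs k + (M / Rabs t) / Rabs (k ^ 2) + (M / Rabs t) / Rabs (k ^ 3))) by (field; lra).
    apply Rmult_le_compat_l. apply sqrt_pos.
    unfold Rdiv. repeat apply Rplus_le_compat; apply Rmult_le_compat_r; try (left; apply Rinv_0_lt_compat; lra);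
      unfold Rdiv in *; lra. }
  pose proof (Hbet r ltac:(rewrite Rabs_right; lra)) as B1.
  pose proof (Hbet (- r) ltac:(rewrite Rabs_left; lra)) as B2.
  rewrite Rabs_right in B1 by lra. rewrite Rabs_left in B2 by lra. rewrite Ropp_involutive in B2.
  pose proof (HR1 r HrR1) as B3.
  eapply Rle_lt_trans. apply (norm_triangle (K:=R_AbsRing) (V:=CV)).
  eapply Rle_lt_trans. apply Rplus_le_compat. apply norm_minus_le. apply norm_scal_C.
  assert (HKr : 2 * (K0 / r) < eps / 2).
  { assert (4 * K0 < eps * r).
    { assert (4 * K0 / eps < r) by lra. apply (Rmult_lt_compat_l eps) in H; auto.
      replace (eps * (4 * K0 / eps)) with (4 * K0) in H by (field; lra). lra. }
    apply (Rmult_lt_reg_r r). lra. replace (2 * (K0 / r) * r) with (2 * K0) by (field; lra). lra. }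
  rewrite Rabs_right. 2:{ apply Rle_ge. left. apply Rinv_0_lt_compat. auto. }
  assert (/ k^2 * @norm _ CV (@minus CV (RInt (V:=CV) (cE u3 k) (- r) r) Lam) < eps / 2).
  { apply (Rmult_lt_reg_l (k^2)); auto. rewrite <- Rmult_assoc, Rinv_r, Rmult_1_l by lra.
    replace (k^2 * (eps/2)) with (eps * k^2 / 2) by field. exact B3. }
  lra.
Qed.

Definition jc (h : R -> R -> R) : Prop := forall a b, continuous (fun p : R * R => h (fst p) (snd p)) (a, b).

Lemma jc_comp2 (h : R -> R -> R) (f g : R -> R) x : jc h -> continuous f x -> continuous g x ->
  continuous (fun t => h (f t) (g t)) x.
Proof.
  intros Hh Hf Hg. apply (continuous_comp_2 (U:=R_UniformSpace) (V:=R_UniformSpace) (W:=R_UniformSpace) (X:=R_UniformSpace) f g h); auto.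
Qed.

Lemma jc_slice1 h b a : jc h -> continuous (fun t => h t b) a.
Proof. intros H. apply (jc_comp2 h (fun t => t) (fun _ => b)); auto. apply continuous_id. apply continuous_const. Qed.
Lemma jc_slice2 h a b : jc h -> continuous (fun t => h a t) b.
Proof. intros H. apply (jc_comp2 h (fun _ => a) (fun t => t)); auto. apply continuous_const. apply continuous_id. Qed.

Lemma jc_swap h : jc h -> jc (fun a b => h b a).
Proof.
  intros H a b. simpl.
  apply (continuous_comp_2 (U:=prod_UniformSpace R_UniformSpace R_UniformSpace) (V:=R_UniformSpace) (W:=R_UniformSpace) (X:=R_UniformSpace)
    (fun p : R * R => snd p) (fun p : R * R => fst p) h (a, b)).
  apply continuous_snd. apply continuous_fst. simpl. apply H.
Qed.

Lemma jc_c2d h a b : jc h -> continuity_2d_pt h a b.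
Proof. intros H. apply continuity_2d_pt_filterlim. apply H. Qed.

Lemma exRInt_slice1 h b α β : jc h -> ex_RInt (fun a => h a b) α β.
Proof. intros H. apply (ex_RInt_continuous (V:=R_CompleteNormedModule)). intros; apply jc_slice1; auto. Qed.

Lemma PCR (h hb : R -> R -> R) (α β : R) :
  (forall a b, is_derive (fun b' => h a b') b (hb a b)) -> jc h -> jc hb ->
  forall b, is_derive (fun b' => RInt (fun a => h a b') α β) b (RInt (fun a => hb a b) α β).
Proof.
  intros Hd Hc Hbc b.
  assert (E : RInt (fun t => Derive (fun u => h t u) b) α β = RInt (fun a => hb a b) α β).
  { apply RInt_ext. intros; apply is_derive_unique; auto. }
  rewrite <- E.
  apply (is_derive_RInt_param (fun x t => h t x) α β b).
  - apply filter_forall. intros x0 t _. eexists; apply Hd.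
  - intros t _.
    replace (fun u v : R => Derive (fun z : R => h v z) u) with (fun u v => hb v u).
    2:{ apply functional_extensionality; intro u; apply functional_extensionality; intro v.
        symmetry; apply is_derive_unique; auto. }
    apply jc_c2d. apply (jc_swap hb Hbc).
  - apply filter_forall. intros y. apply exRInt_slice1; auto.
Qed.

Lemma PCR_cont (h hb : R -> R -> R) (α β : R) :
  (forall a b, is_derive (fun b' => h a b') b (hb a b)) -> jc h -> jc hb ->
  forall b, continuous (fun b' => RInt (fun a => h a b') α β) b.
Proof.
  intros Hd Hc Hbc b. apply (ex_derive_continuous (K:=R_AbsRing) (V:=R_NormedModule)).
  eexists. apply PCR; auto.
Qed.

Lemma fubini (h ha hb : R -> R -> R) α β γ δ :
  (forall a b, is_derive (fun a' => h a' b) a (ha a b)) ->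
  (forall a b, is_derive (fun b' => h a b') b (hb a b)) ->
  jc h -> jc ha -> jc hb ->
  RInt (fun b => RInt (fun a => h a b) α β) γ δ = RInt (fun a => RInt (fun b => h a b) γ δ) α β.
Proof.
  intros Ha Hb Hc Hac Hbc.
  set (G := fun t => RInt (fun b => h t b) γ δ).
  assert (HG : forall t, continuous G t).
  { intros t. unfold G.
    apply (PCR_cont (fun b a => h a b) (fun b a => ha a b) γ δ); auto.
    apply jc_swap; auto. apply jc_swap; auto. }
  set (Phi := fun t => RInt (fun b => RInt (fun a => h a b) α t) γ δ).
  assert (HPhi : forall t, is_derive Phi t (G t)).
  { intros t. unfold Phi, G.
    assert (E : RInt (fun b => Derive (fun u => RInt (fun a => h a b) α u) t) γ δ = RInt (fun b => h t b) γ δ).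
    { apply RInt_ext. intros x _. apply is_derive_unique.
      apply (is_derive_RInt (V:=R_CompleteNormedModule) (fun a => h a x) (RInt (fun a => h a x) α) α t).
      apply filter_forall. intros; apply RInt_correct. apply exRInt_slice1; auto.
      apply jc_slice1; auto. }
    rewrite <- E.
    apply (is_derive_RInt_param (fun x b => RInt (fun a => h a b) α x) γ δ t).
    - apply filter_forall. intros x0 b _. eexists.
      apply (is_derive_RInt (V:=R_CompleteNormedModule) (fun a => h a b) (RInt (fun a => h a b) α) α x0).
      apply filter_forall. intros; apply RInt_correct. apply exRInt_slice1; auto.
      apply jc_slice1; auto.
    - intros b _.
      replace (fun u v : R => Derive (fun z : R => RInt (fun a => h a v) α z) u) with h.
      2:{ apply functional_extensionality; intro u; apply functional_extensionality; intro v.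
          symmetry; apply is_derive_unique.
          apply (is_derive_RInt (V:=R_CompleteNormedModule) (fun a => h a v) (RInt (fun a => h a v) α) α u).
          apply filter_forall. intros; apply RInt_correct. apply exRInt_slice1; auto.
          apply jc_slice1; auto. }
      apply jc_c2d; auto.
    - apply filter_forall. intros y.
      apply (ex_RInt_continuous (V:=R_CompleteNormedModule)). intros z _.
      apply (PCR_cont h hb α y); auto. }
  assert (HPsi : forall t, is_derive (fun t => RInt G α t) t (G t)).
  { intros t. apply (is_derive_RInt (V:=R_CompleteNormedModule) G (RInt G α) α t).
    apply filter_forall. intros; apply RInt_correct. apply (ex_RInt_continuous (V:=R_CompleteNormedModule)); intros; auto.
    auto. }
  assert (I1 := is_RInt_derive (V:=R_CompleteNormedModule) Phi G α β (fun x _ => HPhi x) (fun x _ => HG x)).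
  assert (I2 := is_RInt_derive (V:=R_CompleteNormedModule) (fun t => RInt G α t) G α β (fun x _ => HPsi x) (fun x _ => HG x)).
  pose proof (is_RInt_unique _ _ _ _ I1) as U1. pose proof (is_RInt_unique _ _ _ _ I2) as U2.
  rewrite U1 in U2.
  assert (Phi α = 0).
  { unfold Phi. rewrite <- (RInt_ext (fun _ => 0)). 2:{ intros; rewrite RInt_point; reflexivity. }
    rewrite RInt_const. unfold scal; simpl; unfold mult; simpl; ring. }
  assert (RInt G α α = 0) by (rewrite RInt_point; reflexivity).
  change (Phi β = RInt G α β).
  unfold minus, plus, opp in U2; simpl in U2. lra.
Qed.

Lemma normCmod (z : C) : @norm _ CV z = Cmod z.
Proof. destruct z. rewrite normC. reflexivity. Qed.

Lemma Cmod_expi t : Cmod (expi t) = 1.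
Proof. unfold Cmod, expi; simpl. pose proof (sin2_cos2 t). unfold Rsqr in H. rewrite <- sqrt_1 at 3. f_equal. lra. Qed.

Lemma is_RInt_C_fst (h : R -> C) a b L : is_RInt (V:=CV) h a b L -> is_RInt (fun t => fst (h t)) a b (fst L).
Proof. intros H. apply (is_RInt_fct_extend_fst (U:=R_NormedModule) (V:=R_NormedModule) h a b L H). Qed.
Lemma is_RInt_C_snd (h : R -> C) a b L : is_RInt (V:=CV) h a b L -> is_RInt (fun t => snd (h t)) a b (snd L).
Proof. intros H. apply (is_RInt_fct_extend_snd (U:=R_NormedModule) (V:=R_NormedModule) h a b L H). Qed.
Lemma is_RInt_C_pair (h : R -> C) a b x y : is_RInt (fun t => fst (h t)) a b x -> is_RInt (fun t => snd (h t)) a b y ->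
  is_RInt (V:=CV) h a b ((x, y) : C).
Proof. intros H1 H2. apply (is_RInt_fct_extend_pair (U:=R_NormedModule) (V:=R_NormedModule) h a b x y H1 H2). Qed.

Lemma ex_RInt_C_pair (h : R -> C) a b : ex_RInt (fun t => fst (h t)) a b -> ex_RInt (fun t => snd (h t)) a b ->
  ex_RInt (V:=CV) h a b.
Proof. intros [x H1] [y H2]. exists ((x,y) : C). apply is_RInt_C_pair; auto. Qed.

Lemma RInt_C_eq (h : R -> C) a b : ex_RInt (fun t => fst (h t)) a b -> ex_RInt (fun t => snd (h t)) a b ->
  RInt (V:=CV) h a b = ((RInt (fun t => fst (h t)) a b, RInt (fun t => snd (h t)) a b) : C).
Proof.
  intros H1 H2. apply is_RInt_unique. apply is_RInt_C_pair; apply (RInt_correct (V:=R_CompleteNormedModule)); auto.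
Qed.

Lemma is_RInt_Cmult_r (h : R -> C) a b L (c : C) : is_RInt (V:=CV) h a b L ->
  is_RInt (V:=CV) (fun t => Cmult (h t) c) a b (Cmult L c).
Proof.
  intros H. destruct c as [c1 c2]. destruct L as [l1 l2].
  pose proof (is_RInt_C_fst _ _ _ _ H) as H1. pose proof (is_RInt_C_snd _ _ _ _ H) as H2. simpl in H1, H2.
  replace (Cmult (l1, l2) (c1, c2)) with ((@minus R_NormedModule (scal c1 l1) (scal c2 l2), @plus R_NormedModule (scal c2 l1) (scal c1 l2)) : C)
    by (unfold Cmult; simpl; f_equal; unfold minus,plus,opp,scal; simpl; unfold mult; simpl; ring).
  apply is_RInt_C_pair.
  - eapply is_RInt_ext. 2:{ apply (is_RInt_minus (V:=R_NormedModule)).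
      apply (is_RInt_scal (V:=R_NormedModule) _ _ _ c1 _ H1). apply (is_RInt_scal (V:=R_NormedModule) _ _ _ c2 _ H2). }
    intros x _. unfold Cmult; simpl. unfold minus, plus, opp, scal; simpl. unfold mult; simpl. ring.
  - eapply is_RInt_ext. 2:{ apply (is_RInt_plus (V:=R_NormedModule)).
      apply (is_RInt_scal (V:=R_NormedModule) _ _ _ c2 _ H1). apply (is_RInt_scal (V:=R_NormedModule) _ _ _ c1 _ H2). }
    intros x _. unfold Cmult; simpl. unfold minus, plus, opp, scal; simpl. unfold mult; simpl. ring.
Qed.

Lemma is_RInt_Cmult_l (h : R -> C) a b L (c : C) : is_RInt (V:=CV) h a b L ->
  is_RInt (V:=CV) (fun t => Cmult c (h t)) a b (Cmult c L).
Proof.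
  intros H. rewrite Cmult_comm. eapply (is_RInt_ext (V:=CV)). 2: apply (is_RInt_Cmult_r h a b L c H).
  intros; simpl. apply Cmult_comm.
Qed.

Lemma ex_RInt_Cmult_r (h : R -> C) a b c : ex_RInt (V:=CV) h a b -> ex_RInt (V:=CV) (fun t => Cmult (h t) c) a b.
Proof. intros [L H]. eexists. apply is_RInt_Cmult_r; eauto. Qed.

Lemma RInt_Cmult_r (h : R -> C) a b c : ex_RInt (V:=CV) h a b ->
  RInt (V:=CV) (fun t => Cmult (h t) c) a b = Cmult (RInt (V:=CV) h a b) c.
Proof. intros H. apply is_RInt_unique. apply is_RInt_Cmult_r. apply RInt_correct; auto. Qed.
Lemma RInt_Cmult_l (h : R -> C) a b c : ex_RInt (V:=CV) h a b ->
  RInt (V:=CV) (fun t => Cmult c (h t)) a b = Cmult c (RInt (V:=CV) h a b).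
Proof. intros H. apply is_RInt_unique. apply is_RInt_Cmult_l. apply RInt_correct; auto. Qed.

Lemma norm_Cmult (z w : C) : @norm _ CV (Cmult z w) = @norm _ CV z * @norm _ CV w.
Proof. rewrite !normCmod. apply Cmod_mult. Qed.

Lemma norm_Cmult_expi (z : C) t : @norm _ CV (Cmult z (expi t)) = @norm _ CV z.
Proof. rewrite norm_Cmult, (normCmod (expi t)), Cmod_expi. ring. Qed.

Lemma int_inv_quad (K rho a b : R) : 0 < rho -> a <= b ->
  is_RInt (fun t => K / (t^2 + rho^2)) a b (K / rho * atan (b / rho) - K / rho * atan (a / rho)).
Proof.
  intros Hr Hab.
  apply (is_RInt_derive (V:=R_CompleteNormedModule) (fun t => K / rho * atan (t / rho))).
  - intros x _. assert (0 < x^2 + rho^2) by nra.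
    apply (is_derive_ext (fun t => K / rho * atan (t / rho))). reflexivity.
    apply is_derive_Reals.
    replace (K / (x^2 + rho^2)) with (K / rho * (/ (1 + (x/rho)^2) * / rho)).
    2:{ field. split; nra. }
    apply derivable_pt_lim_scal.
    apply (derivable_pt_lim_comp (fun t => t / rho) atan x (/ rho)).
    + apply is_derive_Reals. auto_derive. auto. field. lra.
    + apply derivable_pt_lim_atan.
  - intros x _. apply (ex_derive_continuous (K:=R_AbsRing) (V:=R_NormedModule) (fun t => K / (t^2 + rho^2))).
    auto_derive. nra.
Qed.

Lemma int_inv_quad_le (K rho a b : R) : 0 < rho -> a <= b -> 0 <= K ->
  K / rho * atan (b / rho) - K / rho * atan (a / rho) <= K * PI / rho.
Proof.
  intros Hr Hab HK. pose proof (atan_bound (b/rho)). pose proof (atan_bound (a/rho)).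
  assert (0 <= K / rho) by (apply Rdiv_le_0_compat; lra).
  replace (K * PI / rho) with (K / rho * (PI/2) - K/rho * (- (PI / 2))) by (field; lra).
  apply Rplus_le_compat. apply Rmult_le_compat_l; lra. apply Ropp_le_contravar. apply Rmult_le_compat_l; lra.
Qed.

Lemma norm_int_quad (h : R -> C) (K rho a b : R) : 0 < rho -> a <= b -> 0 <= K -> ex_RInt (V:=CV) h a b ->
  (forall t, a <= t <= b -> @norm _ CV (h t) <= K / (t^2 + rho^2)) ->
  @norm _ CV (RInt (V:=CV) h a b) <= K * PI / rho.
Proof.
  intros Hr Hab HK Hex Hb. eapply Rle_trans.
  apply (norm_RInt_le' h _ a b _ Hab Hex Hb (int_inv_quad K rho a b Hr Hab)).
  apply int_inv_quad_le; auto.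
Qed.

Record Hyp2 (g0 g1 g2 g3 gb : R -> R -> R) (c C : R) : Prop := {
  hC : 0 <= C;
  hd1 : forall a b, is_derive (fun a' => g0 a' b) a (g1 a b);
  hd2 : forall a b, is_derive (fun a' => g1 a' b) a (g2 a b);
  hd3 : forall a b, is_derive (fun a' => g2 a' b) a (g3 a b);
  hdb : forall a b, is_derive (fun b' => g0 a b') b (gb a b);
  hj0 : jc g0; hj1 : jc g1; hj2 : jc g2; hj3 : jc g3; hjb : jc gb;
  hb0 : forall a b, 1 < a^2+b^2+c^2 -> Rabs (g0 a b) <= C / sqrt (a^2+b^2+c^2);
  hb1 : forall a b, 1 < a^2+b^2+c^2 -> Rabs (g1 a b) <= C / (a^2+b^2+c^2);
  hb2 : forall a b, 1 < a^2+b^2+c^2 -> Rabs (g2 a b) <= C / ((a^2+b^2+c^2) * sqrt (a^2+b^2+c^2));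
  hb3 : forall a b, 1 < a^2+b^2+c^2 -> Rabs (g3 a b) <= C / (a^2+b^2+c^2)^2;
  hbb : forall a b, 1 < a^2+b^2+c^2 -> Rabs (gb a b) <= C / (a^2+b^2+c^2) }.

Lemma dle (C x y : R) : 0 <= C -> 0 < x -> x <= y -> C / y <= C / x.
Proof. intros HC Hx Hxy. unfold Rdiv. apply Rmult_le_compat_l; auto. apply Rinv_le_contravar; auto. Qed.

Lemma sqrt_ge_abs (a Q : R) : a^2 <= Q -> Rabs a <= sqrt Q.
Proof. intros H. rewrite <- sqrt_Rsqr_abs. apply sqrt_le_1_alt. unfold Rsqr. lra. Qed.

Lemma sqrt_ge_1 Q : 1 <= Q -> 1 <= sqrt Q.
Proof. intros H. rewrite <- sqrt_1. apply sqrt_le_1_alt; auto. Qed.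

Lemma abs_sq a : Rabs a ^ 2 = a ^ 2.
Proof. apply pow2_abs. Qed.

Section B.
Variables (g0 g1 g2 g3 gb : R -> R -> R) (c C : R).
Hypothesis H : Hyp2 g0 g1 g2 g3 gb c C.

Lemma L_b1 a b : 2 <= Rabs a ->
  Rabs (g0 a b) <= C / Rabs a /\ Rabs (g1 a b) <= C / Rabs a /\ Rabs (g2 a b) <= C / Rabs a /\ Rabs (g3 a b) <= C / a^2.
Proof.
  intros Ha. pose proof (hC _ _ _ _ _ _ _ H) as HC.
  set (Q := a^2+b^2+c^2).
  assert (HaQ : a^2 <= Q) by (unfold Q; nra).
  assert (Ha2 : 4 <= a^2) by (rewrite <- abs_sq; nra).
  assert (HQ : 1 < Q) by lra.
  assert (HsQ : Rabs a <= sqrt Q) by (apply sqrt_ge_abs; auto).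
  assert (Hs1 : 1 <= sqrt Q) by (apply sqrt_ge_1; lra).
  assert (Habs : Rabs a <= a^2) by (rewrite <- abs_sq; nra).
  repeat split.
  - eapply Rle_trans. apply (hb0 _ _ _ _ _ _ _ H). { fold Q; lra. } fold Q. apply dle; lra.
  - eapply Rle_trans. apply (hb1 _ _ _ _ _ _ _ H). { fold Q; lra. } fold Q. apply dle; lra.
  - assert (sqrt Q <= Q * sqrt Q) by nra.
    eapply Rle_trans. apply (hb2 _ _ _ _ _ _ _ H). { fold Q; lra. } fold Q. apply dle; lra.
  - assert (Q <= Q^2) by nra.
    eapply Rle_trans. apply (hb3 _ _ _ _ _ _ _ H). { fold Q; lra. } fold Q. apply dle; lra.
Qed.

Lemma L_bs s a b : 2 <= s -> s <= Rabs a ->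
  Rabs (g0 a b) <= C / s /\ Rabs (g1 a b) <= C / (b^2 + s^2) /\ Rabs (g2 a b) <= C / (b^2 + s^2) /\
  Rabs (g3 a b) <= C / ((b^2 + s^2) * a^2) /\ Rabs (gb a b) <= C / (b^2 + s^2).
Proof.
  intros Hs Ha. pose proof (hC _ _ _ _ _ _ _ H) as HC.
  set (Q := a^2+b^2+c^2).
  assert (Ha2 : s^2 <= a^2) by (rewrite <- (abs_sq a); nra).
  assert (HbQ : b^2 + s^2 <= Q) by (unfold Q; nra).
  assert (HaQ : a^2 <= Q) by (unfold Q; nra).
  assert (Hb2 : 0 <= b^2) by nra.
  assert (HQ : 1 < Q) by nra.
  assert (HsQ : s <= sqrt Q).
  { eapply Rle_trans. 2: apply (sqrt_ge_abs a Q HaQ). lra. }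
  assert (Hs1 : 1 <= sqrt Q) by (apply sqrt_ge_1; lra).
  repeat split.
  - eapply Rle_trans. apply (hb0 _ _ _ _ _ _ _ H). { fold Q; lra. } fold Q. apply dle; lra.
  - eapply Rle_trans. apply (hb1 _ _ _ _ _ _ _ H). { fold Q; lra. } fold Q. apply dle; nra.
  - eapply Rle_trans. apply (hb2 _ _ _ _ _ _ _ H). { fold Q; lra. } fold Q. apply dle; nra.
  - eapply Rle_trans. apply (hb3 _ _ _ _ _ _ _ H). { fold Q; lra. } fold Q. apply dle; [lra| |].
    { assert (0 < b^2 + s^2) by nra. assert (0 < a^2) by nra. nra. }
    replace (Q^2) with (Q * Q) by ring. apply Rmult_le_compat; nra.
  - eapply Rle_trans. apply (hbb _ _ _ _ _ _ _ H). { fold Q; lra. } fold Q. apply dle; nra.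
Qed.

Lemma L_brho a b : 1 < b^2 + c^2 ->
  Rabs (g3 a b) <= C / ((b^2 + c^2) * (a^2 + sqrt (b^2 + c^2) ^ 2)).
Proof.
  intros Hr. pose proof (hC _ _ _ _ _ _ _ H) as HC.
  rewrite pow2_sqrt by lra.
  eapply Rle_trans. apply (hb3 _ _ _ _ _ _ _ H). nra.
  apply dle; [lra| |].
  { assert (0 < b^2 + c^2) by nra. assert (0 < a^2 + (b^2+c^2)) by nra. nra. }
  replace ((a^2+b^2+c^2)^2) with ((a^2+b^2+c^2) * (a^2+b^2+c^2)) by ring. apply Rmult_le_compat; nra.
Qed.

End B.

Section Core1.
Variables (g0 g1 g2 g3 gb : R -> R -> R) (c C k : R).
Hypothesis H : Hyp2 g0 g1 g2 g3 gb c C.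
Hypothesis Hk : k <> 0.

Lemma ex_Lam b : exists Lam, is_RInt_gen (V:=CV) (cE (fun a => g3 a b) k) (Rbar_locally m_infty) (Rbar_locally p_infty) Lam /\
   filterlim (fun r => RInt (V:=CV) (cex (fun a => g0 a b) k) (- r) r) (Rbar_locally p_infty) (locally (T:=CV) (@scal _ CV (/ k^2) Lam)).
Proof.
  apply (FT1 (fun a => g0 a b) (fun a => g1 a b) (fun a => g2 a b) (fun a => g3 a b) k C 2); auto; try lra.
  - intros t; apply (hd1 _ _ _ _ _ _ _ H).
  - intros t; apply (hd2 _ _ _ _ _ _ _ H).
  - intros t; apply (hd3 _ _ _ _ _ _ _ H).
  - intros t; apply jc_slice1; apply (hj3 _ _ _ _ _ _ _ H).
  - intros t Ht. apply (L_b1 _ _ _ _ _ _ _ H); auto.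
Qed.

Definition Lam b := proj1_sig (constructive_indefinite_description _ (ex_Lam b)).
Definition Af b := @scal _ CV (/ k^2) (Lam b).

Lemma Lam_spec b : is_RInt_gen (V:=CV) (cE (fun a => g3 a b) k) (Rbar_locally m_infty) (Rbar_locally p_infty) (Lam b) /\
   filterlim (fun r => RInt (V:=CV) (cex (fun a => g0 a b) k) (- r) r) (Rbar_locally p_infty) (locally (T:=CV) (Af b)).
Proof. unfold Af, Lam. destruct (constructive_indefinite_description _ (ex_Lam b)) as [L HL]. simpl. exact HL. Qed.

Lemma exRInt_cE3 b α β : ex_RInt (V:=CV) (cE (fun a => g3 a b) k) α β.
Proof. apply ex_RInt_cont. intros; apply cont_cE. apply jc_slice1; apply (hj3 _ _ _ _ _ _ _ H). Qed.

Lemma A_bound b : 1 < b^2 + c^2 ->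
  @norm _ CV (Af b) <= sqrt 2 * C * PI / (Rabs k)^3 / sqrt (b^2 + c^2) ^ 3.
Proof.
  intros Hr. pose proof (hC _ _ _ _ _ _ _ H) as HC.
  set (rho := sqrt (b^2 + c^2)).
  assert (Hrho1 : 1 < rho) by (unfold rho; rewrite <- sqrt_1; apply sqrt_lt_1_alt; lra).
  assert (Hrho2 : rho^2 = b^2 + c^2) by (unfold rho; apply pow2_sqrt; nra).
  assert (Hk' : 0 < Rabs k) by (apply Rabs_pos_lt; auto).
  assert (Hs2 : 0 < sqrt 2) by (apply sqrt_lt_R0; lra).
  assert (HL : @norm _ CV (Lam b) <= (sqrt 2 * C / (Rabs k * rho^2)) * PI / rho).
  { destruct (Lam_spec b) as [HL _].
    rewrite <- (minus_zero_r (Lam b)).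
    apply (lim_norm_le _ _ zero _ 0 (gen_sym _ _ HL)).
    intros r Hr0. rewrite minus_zero_r.
    apply norm_int_quad; try lra.
    - apply Rdiv_le_0_compat. nra. apply Rmult_lt_0_compat; nra.
    - apply exRInt_cE3.
    - intros t _. eapply Rle_trans. apply norm_cE_le; auto.
      pose proof (L_brho _ _ _ _ _ _ _ H t b Hr) as Hg. fold rho in Hg. rewrite <- Hrho2 in Hg.
      replace (sqrt 2 * C / (Rabs k * rho ^ 2) / (t ^ 2 + rho ^ 2))
        with (sqrt 2 * ((C / (rho^2 * (t^2 + rho^2))) / Rabs k)) by (field; repeat split; try lra; nra).
      apply Rmult_le_compat_l; [lra|]. unfold Rdiv. apply Rmult_le_compat_r.
      left; apply Rinv_0_lt_compat; lra. exact Hg. }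
  unfold Af. eapply Rle_trans. apply norm_scal_C.
  rewrite Rabs_right by (apply Rle_ge; left; apply Rinv_0_lt_compat; apply pow2_gt_0; auto).
  replace (sqrt 2 * C * PI / Rabs k ^ 3 / rho ^ 3) with (/ k^2 * ((sqrt 2 * C / (Rabs k * rho^2)) * PI / rho)).
  2:{ rewrite <- (pow2_abs k). field. split; lra. }
  apply Rmult_le_compat_l. left; apply Rinv_0_lt_compat; apply pow2_gt_0; auto. exact HL.
Qed.

End Core1.

Definition ep (l b : R) : C := expi (- (l * b)).

Lemma jc_mul f g : jc f -> jc g -> jc (fun a b => f a b * g a b).
Proof. intros Hf Hg a b. apply (continuous_mult (K:=R_AbsRing) (fun p : R * R => f (fst p) (snd p)) (fun p : R * R => g (fst p) (snd p))); auto. Qed.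
Lemma jc_fun1 (φ : R -> R) : (forall x, continuous φ x) -> jc (fun a b => φ a).
Proof. intros H a b. apply (continuous_comp (U:=prod_UniformSpace R_UniformSpace R_UniformSpace) (V:=R_UniformSpace) (W:=R_UniformSpace) (fun p : R * R => fst p) φ). apply continuous_fst. apply H. Qed.
Lemma jc_fun2 (φ : R -> R) : (forall x, continuous φ x) -> jc (fun a b => φ b).
Proof. intros H a b. apply (continuous_comp (U:=prod_UniformSpace R_UniformSpace R_UniformSpace) (V:=R_UniformSpace) (W:=R_UniformSpace) (fun p : R * R => snd p) φ). apply continuous_snd. apply H. Qed.
Lemma jc_opp f : jc f -> jc (fun a b => - f a b).
Proof. intros Hf a b. apply (continuous_opp (V:=R_NormedModule) (fun p : R * R => f (fst p) (snd p))); auto. Qed.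

Lemma cont_fstC (f : R -> C) t : continuous f t -> continuous (fun s => fst (f s)) t.
Proof. intros H. apply (continuous_comp f fst). auto. destruct (f t). apply continuous_fst. Qed.
Lemma cont_sndC (f : R -> C) t : continuous f t -> continuous (fun s => snd (f s)) t.
Proof. intros H. apply (continuous_comp f snd). auto. destruct (f t). apply continuous_snd. Qed.

Lemma cont_Cmult (f g : R -> C) t : continuous f t -> continuous g t -> continuous (fun s => Cmult (f s) (g s)) t.
Proof.
  intros Hf Hg. eapply continuous_ext.
  2:{ apply (continuous_pairC (fun s => fst (f s) * fst (g s) - snd (f s) * snd (g s))
                              (fun s => fst (f s) * snd (g s) + snd (f s) * fst (g s))).
    - apply (continuous_minus (V:=R_NormedModule)); apply cont_mul; auto using cont_fstC, cont_sndC.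
    - apply (continuous_plus (V:=R_NormedModule)); apply cont_mul; auto using cont_fstC, cont_sndC. }
  intros s. simpl. destruct (f s), (g s). reflexivity.
Qed.

Lemma cont_ep l t : continuous (ep l) t.
Proof.
  unfold ep, expi. apply continuous_pairC.
  - apply (ex_derive_continuous (K:=R_AbsRing) (V:=R_NormedModule) (fun s => cos (- (l*s)))). auto_derive; auto.
  - apply (ex_derive_continuous (K:=R_AbsRing) (V:=R_NormedModule) (fun s => sin (- (l*s)))). auto_derive; auto.
Qed.

Lemma cont_cst_fun {U : UniformSpace} (f : U -> C) x : (forall y, f y = f x) -> continuous f x.
Proof. intros H. apply continuous_ext with (fun _ => f x). intros; auto. apply continuous_const. Qed.

Notation CT := C.

Lemma div_le_r a b d : a <= b -> 0 < d -> a / d <= b / d.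
Proof. intros. unfold Rdiv. apply Rmult_le_compat_r; auto. left; apply Rinv_0_lt_compat; auto. Qed.

Section Core2.
Variables (g0 g1 g2 g3 gb : R -> R -> R) (c C k : R).
Hypothesis H : Hyp2 g0 g1 g2 g3 gb c C.
Hypothesis Hk : k <> 0.
Local Notation LamF := (Lam g0 g1 g2 g3 gb c C k H Hk).
Local Notation AF := (Af g0 g1 g2 g3 gb c C k H Hk).

Definition Is (s b : R) : CT := RInt (V:=CV) (cex (fun a => g0 a b) k) (- s) s.
Definition Js (s b : R) : CT := RInt (V:=CV) (cE (fun a => g3 a b) k) (- s) s.
Definition betb (b t : R) : CT := bet (fun a => g0 a b) (fun a => g1 a b) (fun a => g2 a b) k t.

Lemma T_decomp s b : @minus CV (AF b) (Is s b) =
  @plus CV (@minus CV (betb b (- s)) (betb b s)) (@scal _ CV (/ k^2) (@minus CV (LamF b) (Js s b))).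
Proof.
  unfold Is, Js, betb, Af.
  rewrite (cex_decomp (fun a => g0 a b) (fun a => g1 a b) (fun a => g2 a b) (fun a => g3 a b)); auto.
  2: intros t; apply (hd1 _ _ _ _ _ _ _ H).
  2: intros t; apply (hd2 _ _ _ _ _ _ _ H).
  2: intros t; apply (hd3 _ _ _ _ _ _ _ H).
  2: intros t; apply jc_slice1; apply (hj3 _ _ _ _ _ _ _ H).
  destruct (LamF b), (bet _ _ _ k s), (bet _ _ _ k (- s)), (RInt (V:=CV) (cE (fun a => g3 a b) k) (- s) s).
  csimp. f_equal; ring.
Qed.

Lemma Lam_tail s b : 2 <= s ->
  @norm _ CV (@minus CV (LamF b) (Js s b)) <= 2 * (sqrt 2 * C / (Rabs k * (b^2 + s^2))) / s.
Proof.
  intros Hs. pose proof (hC _ _ _ _ _ _ _ H) as HC.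
  assert (Hk' : 0 < Rabs k) by (apply Rabs_pos_lt; auto).
  apply improper_tail; try lra.
  - intros; eapply exRInt_cE3; exact H.
  - apply (Lam_spec _ _ _ _ _ _ _ _ H Hk b).
  - intros t Ht. eapply Rle_trans. apply norm_cE_le; auto.
    destruct (L_bs _ _ _ _ _ _ _ H s t b Hs Ht) as [_ [_ [_ [H3 _]]]].
    assert (0 < t^2) by (assert (0 < Rabs t) by lra; rewrite <- (abs_sq t); nra).
    assert (0 < b^2 + s^2) by nra. assert (t <> 0) by (intro; subst; rewrite Rabs_R0 in Ht; lra).
    replace (sqrt 2 * C / (Rabs k * (b ^ 2 + s ^ 2)) / t ^ 2) with (sqrt 2 * (C / ((b^2+s^2) * t^2) / Rabs k))
      by (field; repeat split; auto; lra).
    apply Rmult_le_compat_l. left; apply sqrt_lt_R0; lra. unfold Rdiv at 1. apply Rmult_le_compat_r.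
    left; apply Rinv_0_lt_compat; lra. exact H3.
Qed.

Definition KB := sqrt 2 * C * (1 / Rabs k + 1 / Rabs (k^2) + 1 / Rabs (k^3)).

Lemma betb_bound s b t0 : 2 <= s -> Rabs t0 = s -> @norm _ CV (betb b t0) <= KB / s.
Proof.
  intros Hs Ht. pose proof (hC _ _ _ _ _ _ _ H) as HC. unfold betb.
  eapply Rle_trans. apply norm_bet_le; auto.
  destruct (L_bs _ _ _ _ _ _ _ H s t0 b Hs ltac:(lra)) as [H0 [H1 [H2 _]]].
  assert (0 < Rabs k) by (apply Rabs_pos_lt; auto).
  assert (0 < Rabs (k^2)) by (apply Rabs_pos_lt; apply pow_nonzero; auto).
  assert (0 < Rabs (k^3)) by (apply Rabs_pos_lt; apply pow_nonzero; auto).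
  assert (C / (b^2 + s^2) <= C / s) by (apply dle; nra).
  unfold KB. replace (sqrt 2 * C * (1 / Rabs k + 1 / Rabs (k ^ 2) + 1 / Rabs (k ^ 3)) / s)
    with (sqrt 2 * ((C / s) / Rabs k + (C/s) / Rabs (k^2) + (C/s) / Rabs (k^3))) by (field; lra).
  apply Rmult_le_compat_l. apply sqrt_pos.
  assert (Rabs (g0 t0 b) / Rabs k <= (C/s) / Rabs k) by (apply div_le_r; lra).
  assert (Rabs (g1 t0 b) / Rabs (k^2) <= (C/s) / Rabs (k^2)) by (apply div_le_r; lra).
  assert (Rabs (g2 t0 b) / Rabs (k^3) <= (C/s) / Rabs (k^3)) by (apply div_le_r; lra).
  lra.
Qed.

Definition KU := 2 * KB + 2 * sqrt 2 * C / (k^2 * Rabs k).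

Lemma unif_bound s b : 2 <= s -> @norm _ CV (@minus CV (AF b) (Is s b)) <= KU / s.
Proof.
  intros Hs. pose proof (hC _ _ _ _ _ _ _ H) as HC.
  assert (Hk' : 0 < Rabs k) by (apply Rabs_pos_lt; auto).
  assert (Hk2 : 0 < k^2) by (apply pow2_gt_0; auto).
  rewrite T_decomp. eapply Rle_trans. apply (norm_triangle (K:=R_AbsRing) (V:=CV)).
  eapply Rle_trans. apply Rplus_le_compat. apply norm_minus_le. apply norm_scal_C.
  pose proof (betb_bound s b (- s) Hs ltac:(rewrite Rabs_left; lra)).
  pose proof (betb_bound s b s Hs ltac:(rewrite Rabs_right; lra)).
  pose proof (Lam_tail s b Hs).
  rewrite Rabs_right by (apply Rle_ge; left; apply Rinv_0_lt_compat; auto).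
  assert (Hq : 2 * (sqrt 2 * C / (Rabs k * (b ^ 2 + s ^ 2))) / s <= 2 * (sqrt 2 * C / Rabs k) / s).
  { unfold Rdiv. apply Rmult_le_compat_r. left; apply Rinv_0_lt_compat; lra.
    apply Rmult_le_compat_l. lra. apply Rmult_le_compat_l. apply Rmult_le_pos. apply sqrt_pos. auto.
    apply Rinv_le_contravar. auto. rewrite <- (Rmult_1_r (Rabs k)) at 1. apply Rmult_le_compat_l; nra. }
  assert (/ k^2 * @norm _ CV (@minus CV (LamF b) (Js s b)) <= / k^2 * (2 * (sqrt 2 * C / Rabs k) / s)).
  { apply Rmult_le_compat_l. left; apply Rinv_0_lt_compat; auto. lra. }
  unfold KU. replace ((2 * KB + 2 * sqrt 2 * C / (k ^ 2 * Rabs k)) / s) with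
    (KB / s + KB / s + / k ^ 2 * (2 * (sqrt 2 * C / Rabs k) / s)) by (field; lra).
  lra.
Qed.

Lemma Is_cont s b : continuous (Is s) b.
Proof.
  assert (E : forall b', Is s b' = ((RInt (fun a => g0 a b' * cos (k*a)) (- s) s, RInt (fun a => - (g0 a b' * sin (k*a))) (- s) s) : CT)).
  { intros b'. unfold Is. rewrite RInt_C_eq; unfold cex; simpl; auto.
    - apply (exRInt_slice1 (fun a b => g0 a b * cos (k*a)) b' (-s) s). apply jc_mul. apply (hj0 _ _ _ _ _ _ _ H). apply jc_fun1. intros; apply cont_cos.
    - apply (exRInt_slice1 (fun a b => - (g0 a b * sin (k*a))) b' (-s) s). apply jc_opp. apply jc_mul. apply (hj0 _ _ _ _ _ _ _ H). apply jc_fun1. intros; apply cont_sin. }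
  apply continuous_ext with (fun b' => ((RInt (fun a => g0 a b' * cos (k*a)) (- s) s, RInt (fun a => - (g0 a b' * sin (k*a))) (- s) s) : CT)).
  intros; symmetry; apply E.
  apply continuous_pairC.
  - apply (PCR_cont (fun a b => g0 a b * cos (k*a)) (fun a b => gb a b * cos (k*a))).
    + intros a b0. auto_derive. eexists; apply (hdb _ _ _ _ _ _ _ H).
      match goal with |- context [Derive ?f b0] => rewrite (is_derive_unique f b0 (gb a b0) (hdb _ _ _ _ _ _ _ H a b0)) end. ring.
    + apply jc_mul. apply (hj0 _ _ _ _ _ _ _ H). apply jc_fun1. intros; apply cont_cos.
    + apply jc_mul. apply (hjb _ _ _ _ _ _ _ H). apply jc_fun1. intros; apply cont_cos.
  - apply (PCR_cont (fun a b => - (g0 a b * sin (k*a))) (fun a b => - (gb a b * sin (k*a)))).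
    + intros a b0. auto_derive. eexists; apply (hdb _ _ _ _ _ _ _ H).
      match goal with |- context [Derive ?f b0] => rewrite (is_derive_unique f b0 (gb a b0) (hdb _ _ _ _ _ _ _ H a b0)) end. ring.
    + apply jc_opp. apply jc_mul. apply (hj0 _ _ _ _ _ _ _ H). apply jc_fun1. intros; apply cont_sin.
    + apply jc_opp. apply jc_mul. apply (hjb _ _ _ _ _ _ _ H). apply jc_fun1. intros; apply cont_sin.
Qed.

End Core2.

Lemma ibp1 (u du : R -> R) (l a b : R) : l <> 0 ->
  (forall t, is_derive u t (du t)) -> (forall t, continuous du t) ->
  is_RInt (V:=CV) (fun t => @plus CV (cex u l t) (cE du l t)) a b (@minus CV (cE u l b) (cE u l a)).
Proof.
  intros Hl Hd Hc.
  apply (is_RInt_derive (V:=CV) (cE u l)).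
  - intros x _. unfold cE.
    match goal with |- is_derive _ _ ?v => replace v with
      (((du x * sin (l*x) / l + u x * cos (l*x)), (du x * cos (l*x) / l - u x * sin (l*x))) : C) end.
    2:{ unfold cex, cE. csimp. f_equal; field; auto. }
    apply is_derive_pairC.
    + auto_derive. repeat split; eexists; eauto. rewrite (Der_eq u du Hd). field; auto.
    + auto_derive. repeat split; eexists; eauto. rewrite (Der_eq u du Hd). field; auto.
  - intros x _. apply (continuous_plus (V:=CV)).
    + apply cont_cex. eapply cont_of_der; eauto.
    + apply cont_cE; auto.
Qed.

Lemma cex_ep (u : R -> R) l b : cex u l b = Cmult (RtoC (u b)) (ep l b).
Proof. unfold cex, ep, expi, Cmult, RtoC; simpl. rewrite cos_neg, sin_neg. f_equal; ring. Qed.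

Lemma norm_ep_mult (z : C) l b : @norm _ CV (Cmult z (ep l b)) = @norm _ CV z.
Proof. unfold ep. apply norm_Cmult_expi. Qed.

Lemma C_minus_mult (x y w : C) : @minus CV (Cmult x w) (Cmult y w) = Cmult (@minus CV x y) w.
Proof. destruct x, y, w. csimp. f_equal; ring. Qed.

Section Core3.
Variables (g0 g1 g2 g3 gb : R -> R -> R) (c C k l : R).
Hypothesis H : Hyp2 g0 g1 g2 g3 gb c C.
Hypothesis Hk : k <> 0.
Hypothesis Hl : l <> 0.
Local Notation LamF := (Lam g0 g1 g2 g3 gb c C k H Hk).
Local Notation AF := (Af g0 g1 g2 g3 gb c C k H Hk).
Local Notation IS := (Is g0 k).

Lemma ex_Isep s α β : ex_RInt (V:=CV) (fun b => Cmult (IS s b) (ep l b)) α β.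
Proof. apply ex_RInt_cont. intros t. apply cont_Cmult. apply (Is_cont _ g1 g2 g3 gb c C k H). apply cont_ep. Qed.

Lemma ex_Aep α β : ex_RInt (V:=CV) (fun b => Cmult (AF b) (ep l b)) α β.
Proof.
  pose proof (hC _ _ _ _ _ _ _ H) as HC.
  destruct (filterlim_RInt (U:=R) (V:=CV) (fun s b => Cmult (IS s b) (ep l b)) α β (Rbar_locally p_infty) (Rbar_locally_filter _)
    (fun b => Cmult (AF b) (ep l b)) (fun s => RInt (V:=CV) (fun b => Cmult (IS s b) (ep l b)) α β)) as [If [_ HI]].
  - intros s. apply RInt_correct. apply ex_Isep.
  - intros P [eps HP]. set (KU' := KU C k).
    assert (HKU : 0 <= KU').
    { unfold KU', KU, KB. assert (0 < Rabs k) by (apply Rabs_pos_lt; auto).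
      assert (0 < Rabs (k^2)) by (apply Rabs_pos_lt; apply pow_nonzero; auto).
      assert (0 < Rabs (k^3)) by (apply Rabs_pos_lt; apply pow_nonzero; auto).
      assert (0 < k^2) by (apply pow2_gt_0; auto). assert (0 <= sqrt 2) by apply sqrt_pos.
      apply Rplus_le_le_0_compat. apply Rmult_le_pos. lra. apply Rmult_le_pos. apply Rmult_le_pos; auto.
      repeat apply Rplus_le_le_0_compat; apply Rdiv_le_0_compat; lra.
      apply Rdiv_le_0_compat. apply Rmult_le_pos; [|auto]. apply Rmult_le_pos; lra. apply Rmult_lt_0_compat; lra. }
    exists (Rmax 2 (KU' / eps + 1)). intros s Hs. apply HP. intros b.
    assert (Hs2 : 2 <= s) by (pose proof (Rmax_l 2 (KU' / eps + 1)); lra).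
    assert (Hs3 : KU' / eps + 1 < s) by (pose proof (Rmax_r 2 (KU' / eps + 1)); lra).
    apply (norm_compat1 (K:=R_AbsRing) (V:=CV)).
    rewrite C_minus_mult, norm_ep_mult, norm_minus_sym.
    eapply Rle_lt_trans. apply (unif_bound _ _ _ _ _ _ _ _ H Hk s b Hs2).
    fold KU'. destruct eps as [e He]; simpl in *.
    apply (Rmult_lt_reg_r s). lra. replace (KU' / s * s) with KU' by (field; lra).
    assert (KU' / e < s - 1) by lra. apply (Rmult_lt_compat_l e) in H0; auto.
    replace (e * (KU' / e)) with KU' in H0 by (field; lra). nra.
  - exists If. exact HI.
Qed.

Definition KA := sqrt 2 * C * PI / (Rabs k)^3.

Lemma KA_nonneg : 0 <= KA.
Proof.
  pose proof (hC _ _ _ _ _ _ _ H) as HC. unfold KA.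
  assert (0 < Rabs k ^ 3) by (apply pow_lt; apply Rabs_pos_lt; auto).
  apply Rdiv_le_0_compat; auto. apply Rmult_le_pos. apply Rmult_le_pos; auto. apply sqrt_pos. left; apply PI_RGT_0.
Qed.

Lemma Aep_tail b : 2 <= Rabs b -> @norm _ CV (Cmult (AF b) (ep l b)) <= KA / b^2.
Proof.
  intros Hb. rewrite norm_ep_mult.
  assert (Hb2 : 4 <= b^2) by (rewrite <- (abs_sq b); nra).
  assert (Hr : 1 < b^2 + c^2) by nra.
  eapply Rle_trans. apply (A_bound _ _ _ _ _ _ _ _ H Hk b Hr). fold KA.
  apply dle. apply KA_nonneg. nra.
  set (rho := sqrt (b^2 + c^2)).
  assert (Hrho : Rabs b <= rho) by (apply sqrt_ge_abs; nra).
  assert (2 <= rho) by lra.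
  rewrite <- (abs_sq b). replace (rho^3) with (rho * rho^2) by ring.
  assert (Rabs b ^2 <= rho^2) by (apply pow_incr; split; [apply Rabs_pos| auto]).
  nra.
Qed.

Lemma ex_F : exists F, is_RInt_gen (V:=CV) (fun b => Cmult (AF b) (ep l b)) (Rbar_locally m_infty) (Rbar_locally p_infty) F.
Proof.
  apply (improper_exists _ KA 2). lra. intros; apply ex_Aep.
  intros t Ht. apply Aep_tail; auto.
Qed.

End Core3.

Section Core4.
Variables (g0 g1 g2 g3 gb : R -> R -> R) (c C k l : R).
Hypothesis H : Hyp2 g0 g1 g2 g3 gb c C.
Hypothesis Hk : k <> 0.
Hypothesis Hl : l <> 0.
Local Notation LamF := (Lam g0 g1 g2 g3 gb c C k H Hk).
Local Notation AF := (Af g0 g1 g2 g3 gb c C k H Hk).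
Local Notation IS := (Is g0 k).

Definition B12 (b t : R) : CT :=
  (g1 t b * cos (k*t)/k^2 - g2 t b * sin (k*t)/k^3, - (g1 t b * sin (k*t)/k^2) - g2 t b * cos (k*t)/k^3).

Lemma betb_split b t : betb g0 g1 g2 k b t = @plus CV (cE (fun a => g0 a b) k t) (B12 b t).
Proof. unfold betb, bet, cE, B12. csimp. f_equal; field; auto. Qed.

Lemma HC : 0 <= C.
Proof. exact (hC _ _ _ _ _ _ _ H). Qed.
Lemma Hk' : 0 < Rabs k.
Proof. apply Rabs_pos_lt; auto. Qed.
Lemma Hl' : 0 < Rabs l.
Proof. apply Rabs_pos_lt; auto. Qed.
Lemma Hk2' : 0 < Rabs (k^2).
Proof. apply Rabs_pos_lt; apply pow_nonzero; auto. Qed.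
Lemma Hk3' : 0 < Rabs (k^3).
Proof. apply Rabs_pos_lt; apply pow_nonzero; auto. Qed.

Lemma B12_bound s b t0 : 2 <= s -> Rabs t0 = s ->
  @norm _ CV (B12 b t0) <= sqrt 2 * (C / Rabs (k^2) + C / Rabs (k^3)) / (b^2 + s^2).
Proof.
  intros Hs Ht. pose proof HC. pose proof Hk2'. pose proof Hk3'.
  destruct (L_bs _ _ _ _ _ _ _ H s t0 b Hs ltac:(lra)) as [_ [G1 [G2 _]]].
  assert (Hbs : 0 < b^2 + s^2) by nra.
  replace (sqrt 2 * (C / Rabs (k ^ 2) + C / Rabs (k ^ 3)) / (b ^ 2 + s ^ 2)) with
     (sqrt 2 * ((C / (b^2+s^2)) / Rabs (k^2) + (C / (b^2+s^2)) / Rabs (k^3))) by (field; lra).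
  unfold B12. apply normC_le; cbn [fst snd].
  - unfold Rminus. eapply Rle_trans. apply Rabs_triang. rewrite Rabs_Ropp.
    pose proof (abs_trig_div (g1 t0 b) (cos (k*t0)) (k^2) (abs_cos _) ltac:(apply pow_nonzero; auto)).
    pose proof (abs_trig_div (g2 t0 b) (sin (k*t0)) (k^3) (abs_sin _) ltac:(apply pow_nonzero; auto)).
    assert (Rabs (g1 t0 b) / Rabs (k^2) <= (C / (b^2+s^2)) / Rabs (k^2)) by (apply div_le_r; lra).
    assert (Rabs (g2 t0 b) / Rabs (k^3) <= (C / (b^2+s^2)) / Rabs (k^3)) by (apply div_le_r; lra).
    lra.
  - unfold Rminus. eapply Rle_trans. apply Rabs_triang. rewrite !Rabs_Ropp.
    pose proof (abs_trig_div (g1 t0 b) (sin (k*t0)) (k^2) (abs_sin _) ltac:(apply pow_nonzero; auto)).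
    pose proof (abs_trig_div (g2 t0 b) (cos (k*t0)) (k^3) (abs_cos _) ltac:(apply pow_nonzero; auto)).
    assert (Rabs (g1 t0 b) / Rabs (k^2) <= (C / (b^2+s^2)) / Rabs (k^2)) by (apply div_le_r; lra).
    assert (Rabs (g2 t0 b) / Rabs (k^3) <= (C / (b^2+s^2)) / Rabs (k^3)) by (apply div_le_r; lra).
    lra.
Qed.

Definition KP0 := 2 * sqrt 2 * C / Rabs l + sqrt 2 * C * PI / Rabs l.

Lemma cex_int_bound s t0 r : 2 <= s -> Rabs t0 = s -> 0 <= r ->
  @norm _ CV (RInt (V:=CV) (cex (fun b => g0 t0 b) l) (- r) r) <= KP0 / s.
Proof.
  intros Hs Ht Hr. pose proof HC. pose proof Hl'.
  assert (Hd : forall b, is_derive (fun b' => g0 t0 b') b (gb t0 b)) by (intros; apply (hdb _ _ _ _ _ _ _ H)).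
  assert (Hcd : forall b, continuous (fun b' => gb t0 b') b) by (intros; apply jc_slice2; apply (hjb _ _ _ _ _ _ _ H)).
  assert (Hex : ex_RInt (V:=CV) (cE (fun b => gb t0 b) l) (- r) r) by (apply ex_RInt_cont; intros; apply cont_cE; auto).
  assert (E : RInt (V:=CV) (cex (fun b => g0 t0 b) l) (- r) r =
    @minus CV (@minus CV (cE (fun b => g0 t0 b) l r) (cE (fun b => g0 t0 b) l (- r))) (RInt (V:=CV) (cE (fun b => gb t0 b) l) (- r) r)).
  { apply is_RInt_unique. eapply (is_RInt_ext (V:=CV)).
    2:{ apply (is_RInt_minus (V:=CV)). apply (ibp1 (fun b => g0 t0 b) (fun b => gb t0 b) l (- r) r); auto.
        apply RInt_correct; auto. }
    intros x _. simpl. destruct (cex (fun b : R => g0 t0 b) l x), (cE (fun b : R => gb t0 b) l x). csimp. f_equal; ring. }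
  rewrite E. eapply Rle_trans. apply norm_minus_le. eapply Rle_trans. apply Rplus_le_compat_r. apply norm_minus_le.
  assert (Hb0 : forall b, @norm _ CV (cE (fun b => g0 t0 b) l b) <= sqrt 2 * (C / s / Rabs l)).
  { intros b. eapply Rle_trans. apply norm_cE_le; auto. apply Rmult_le_compat_l. apply sqrt_pos.
    apply div_le_r; auto. apply (L_bs _ _ _ _ _ _ _ H s t0 b Hs ltac:(lra)). }
  assert (Hint : @norm _ CV (RInt (V:=CV) (cE (fun b => gb t0 b) l) (- r) r) <= (sqrt 2 * C / Rabs l) * PI / s).
  { apply norm_int_quad; auto; try lra.
    apply Rdiv_le_0_compat; auto. apply Rmult_le_pos; auto. apply sqrt_pos.
    intros b _. eapply Rle_trans. apply norm_cE_le; auto.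
    destruct (L_bs _ _ _ _ _ _ _ H s t0 b Hs ltac:(lra)) as [_ [_ [_ [_ Hgb]]]].
    replace (sqrt 2 * C / Rabs l / (b ^ 2 + s ^ 2)) with (sqrt 2 * ((C / (b^2 + s^2)) / Rabs l)) by (field; split; nra).
    apply Rmult_le_compat_l. apply sqrt_pos. apply div_le_r; auto. }
  pose proof (Hb0 r). pose proof (Hb0 (- r)).
  unfold KP0. replace ((2 * sqrt 2 * C / Rabs l + sqrt 2 * C * PI / Rabs l) / s) with
    (sqrt 2 * (C / s / Rabs l) + sqrt 2 * (C / s / Rabs l) + sqrt 2 * C / Rabs l * PI / s) by (field; lra).
  lra.
Qed.

Definition Ek0 (t0 : R) : CT := (sin (k*t0) / k, cos (k*t0) / k).

Lemma norm_Ek0 t0 : @norm _ CV (Ek0 t0) <= sqrt 2 / Rabs k.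
Proof.
  pose proof Hk'. unfold Ek0. replace (sqrt 2 / Rabs k) with (sqrt 2 * (1 / Rabs k)) by (field; lra).
  apply normC_le; cbn [fst snd]; unfold Rdiv; rewrite Rabs_mult, Rabs_inv;
  apply Rmult_le_compat_r; try (left; apply Rinv_0_lt_compat; lra); auto using abs_sin, abs_cos.
Qed.

Lemma P0_int_bound s t0 r : 2 <= s -> Rabs t0 = s -> 0 <= r ->
  @norm _ CV (RInt (V:=CV) (fun b => Cmult (cE (fun a => g0 a b) k t0) (ep l b)) (- r) r) <= sqrt 2 / Rabs k * (KP0 / s).
Proof.
  intros Hs Ht Hr.
  rewrite (RInt_ext (V:=CV) _ (fun b => Cmult (Ek0 t0) (cex (fun b => g0 t0 b) l b))).
  2:{ intros x _. rewrite cex_ep. unfold cE, Ek0. destruct (ep l x). unfold Cmult, RtoC; simpl. f_equal; field; auto. }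
  rewrite RInt_Cmult_l. 2:{ apply ex_RInt_cont. intros; apply cont_cex. apply jc_slice2. apply (hj0 _ _ _ _ _ _ _ H). }
  rewrite norm_Cmult. apply Rmult_le_compat. apply norm_ge_0. apply norm_ge_0. apply norm_Ek0.
  apply cex_int_bound; auto.
Qed.

End Core4.

Lemma cont_cE_b (g : R -> R -> R) k t0 b0 : jc g -> continuous (fun b => cE (fun a => g a b) k t0) b0.
Proof.
  intros Hg. unfold cE. apply continuous_pairC.
  - apply cont_mul. apply cont_mul. apply jc_slice2; auto. apply continuous_const. apply continuous_const.
  - apply cont_mul. apply cont_mul. apply jc_slice2; auto. apply continuous_const. apply continuous_const.
Qed.

Section Core5.
Variables (g0 g1 g2 g3 gb : R -> R -> R) (c C k l : R).
Hypothesis H : Hyp2 g0 g1 g2 g3 gb c C.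
Hypothesis Hk : k <> 0.
Hypothesis Hl : l <> 0.
Local Notation LamF := (Lam g0 g1 g2 g3 gb c C k H Hk).
Local Notation AF := (Af g0 g1 g2 g3 gb c C k H Hk).
Local Notation IS := (Is g0 k).

Lemma cont_B12_b t0 b0 : continuous (fun b => B12 g1 g2 k b t0) b0.
Proof.
  pose proof (hj1 _ _ _ _ _ _ _ H) as J1. pose proof (hj2 _ _ _ _ _ _ _ H) as J2.
  unfold B12. apply continuous_pairC.
  - apply (continuous_minus (V:=R_NormedModule)).
    + apply cont_mul. apply cont_mul. apply jc_slice2; auto. apply continuous_const. apply continuous_const.
    + apply cont_mul. apply cont_mul. apply jc_slice2; auto. apply continuous_const. apply continuous_const.
  - apply (continuous_minus (V:=R_NormedModule)). apply (continuous_opp (V:=R_NormedModule)).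
    + apply cont_mul. apply cont_mul. apply jc_slice2; auto. apply continuous_const. apply continuous_const.
    + apply cont_mul. apply cont_mul. apply jc_slice2; auto. apply continuous_const. apply continuous_const.
Qed.

Definition KD := 2 * (sqrt 2 / Rabs k * KP0 C l) + 2 * (sqrt 2 * (C / Rabs (k^2) + C / Rabs (k^3)) * PI)
   + 2 * sqrt 2 * C * PI / (k^2 * Rabs k).

Lemma int_Tep_bound s r : 2 <= s -> 0 <= r ->
  @norm _ CV (@minus CV (RInt (V:=CV) (fun b => Cmult (AF b) (ep l b)) (- r) r)
                        (RInt (V:=CV) (fun b => Cmult (IS s b) (ep l b)) (- r) r)) <= KD / s.
Proof.
  intros Hs Hr. pose proof (HC _ _ _ _ _ _ _ H) as HC0. pose proof (Hk' k Hk) as Hk0.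
  assert (Hk20 : 0 < k^2) by (apply pow2_gt_0; auto).
  set (q1 := fun b => Cmult (cE (fun a => g0 a b) k (- s)) (ep l b)).
  set (q2 := fun b => Cmult (B12 g1 g2 k b (- s)) (ep l b)).
  set (q3 := fun b => Cmult (cE (fun a => g0 a b) k s) (ep l b)).
  set (q4 := fun b => Cmult (B12 g1 g2 k b s) (ep l b)).
  set (Y := fun b => @minus CV (@plus CV (q1 b) (q2 b)) (@plus CV (q3 b) (q4 b))).
  set (q5 := fun b => @minus CV (Cmult (@minus CV (AF b) (IS s b)) (ep l b)) (Y b)).
  assert (ex1 : ex_RInt (V:=CV) q1 (- r) r) by (apply ex_RInt_cont; intros; apply cont_Cmult; [apply cont_cE_b; apply (hj0 _ _ _ _ _ _ _ H)|apply cont_ep]).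
  assert (ex3 : ex_RInt (V:=CV) q3 (- r) r) by (apply ex_RInt_cont; intros; apply cont_Cmult; [apply cont_cE_b; apply (hj0 _ _ _ _ _ _ _ H)|apply cont_ep]).
  assert (ex2 : ex_RInt (V:=CV) q2 (- r) r) by (apply ex_RInt_cont; intros; apply cont_Cmult; [apply cont_B12_b|apply cont_ep]).
  assert (ex4 : ex_RInt (V:=CV) q4 (- r) r) by (apply ex_RInt_cont; intros; apply cont_Cmult; [apply cont_B12_b|apply cont_ep]).
  assert (exY : ex_RInt (V:=CV) Y (- r) r).
  { apply (ex_RInt_minus (V:=CV)); apply (ex_RInt_plus (V:=CV)); auto. }
  assert (exD : ex_RInt (V:=CV) (fun b => Cmult (@minus CV (AF b) (IS s b)) (ep l b)) (- r) r).
  { eapply (ex_RInt_ext (V:=CV)). 2: apply (ex_RInt_minus (V:=CV)); [apply (ex_Aep _ g1 g2 g3 gb c C k l H Hk)|apply (ex_Isep g0 g1 g2 g3 gb c C k l H)].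
    intros x _. simpl. apply C_minus_mult. }
  assert (ex5 : ex_RInt (V:=CV) q5 (- r) r) by (apply (ex_RInt_minus (V:=CV)); auto).
  rewrite <- (RInt_minus (V:=CV)); [| apply (ex_Aep _ g1 g2 g3 gb c C k l H Hk)|apply (ex_Isep g0 g1 g2 g3 gb c C k l H)].
  rewrite (RInt_ext (V:=CV) _ (fun b => @plus CV (Y b) (q5 b))).
  2:{ intros x _. unfold q5. rewrite C_minus_mult. destruct (Cmult (@minus CV (AF x) (IS s x)) (ep l x)), (Y x). csimp. f_equal; ring. }
  rewrite (RInt_plus (V:=CV)); auto.
  unfold Y at 1. rewrite (RInt_minus (V:=CV)); try (apply (ex_RInt_plus (V:=CV)); auto).
  rewrite !(RInt_plus (V:=CV)); auto.
  assert (B1 : @norm _ CV (RInt (V:=CV) q1 (- r) r) <= sqrt 2 / Rabs k * (KP0 C l / s))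
    by (apply (P0_int_bound _ g1 g2 g3 gb c C k l H Hk Hl); auto; rewrite Rabs_left; lra).
  assert (B3 : @norm _ CV (RInt (V:=CV) q3 (- r) r) <= sqrt 2 / Rabs k * (KP0 C l / s))
    by (apply (P0_int_bound _ g1 g2 g3 gb c C k l H Hk Hl); auto; rewrite Rabs_right; lra).
  assert (Bq : forall t0, Rabs t0 = s -> @norm _ CV (RInt (V:=CV) (fun b => Cmult (B12 g1 g2 k b t0) (ep l b)) (- r) r)
              <= sqrt 2 * (C / Rabs (k^2) + C / Rabs (k^3)) * PI / s).
  { intros t0 Ht0. apply norm_int_quad; try lra.
    - pose proof (Hk2' k Hk). pose proof (Hk3' k Hk). apply Rmult_le_pos. apply sqrt_pos.
      apply Rplus_le_le_0_compat; apply Rdiv_le_0_compat; lra.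
    - apply ex_RInt_cont; intros; apply cont_Cmult; [apply cont_B12_b|apply cont_ep].
    - intros b _. rewrite norm_ep_mult. apply (B12_bound g0 g1 g2 g3 gb c C k H Hk); auto. }
  assert (B2 := Bq (- s) ltac:(rewrite Rabs_left; lra)).
  assert (B4 := Bq s ltac:(rewrite Rabs_right; lra)).
  assert (B5 : @norm _ CV (RInt (V:=CV) q5 (- r) r) <= 2 * (sqrt 2 * C / (k^2 * Rabs k) / s) * PI / s).
  { apply norm_int_quad; try lra.
    - apply Rmult_le_pos. lra. apply Rdiv_le_0_compat; [|lra]. apply Rdiv_le_0_compat.
      apply Rmult_le_pos; [apply sqrt_pos|lra]. apply Rmult_lt_0_compat; lra.
    - exact ex5.
    - intros b _. unfold q5, Y, q1, q2, q3, q4.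
      rewrite (T_decomp _ g1 g2 g3 gb c C k H Hk s b).
      rewrite !(betb_split g0 g1 g2 k Hk).
      replace (@minus CV _ _) with (Cmult (@scal _ CV (/ k^2) (@minus CV (LamF b) (Js g3 k s b))) (ep l b)).
      2:{ destruct (ep l b), (LamF b), (Js g3 k s b), (cE (fun a : R => g0 a b) k (- s)), (B12 g1 g2 k b (- s)),
            (cE (fun a : R => g0 a b) k s), (B12 g1 g2 k b s). csimp. f_equal; ring. }
      rewrite norm_ep_mult. eapply Rle_trans. apply norm_scal_C.
      rewrite Rabs_right by (apply Rle_ge; left; apply Rinv_0_lt_compat; auto).
      eapply Rle_trans. apply Rmult_le_compat_l. left; apply Rinv_0_lt_compat; auto.
      apply (Lam_tail _ g1 g2 g3 gb c C k H Hk s b Hs).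
      assert (0 < b^2 + s^2) by nra.
      right. field. repeat split; lra. }
  assert (HKP : 0 <= KP0 C l).
  { unfold KP0. pose proof (Hl' l Hl). pose proof PI_RGT_0. pose proof (sqrt_pos 2).
    assert (0 <= 2 * sqrt 2 * C) by (apply Rmult_le_pos; lra).
    assert (0 <= sqrt 2 * C * PI) by (apply Rmult_le_pos; [apply Rmult_le_pos|]; lra).
    apply Rplus_le_le_0_compat; apply Rdiv_le_0_compat; lra. }
  assert (B5' : 2 * (sqrt 2 * C / (k^2 * Rabs k) / s) * PI / s <= 2 * sqrt 2 * C * PI / (k^2 * Rabs k) / s).
  { pose proof PI_RGT_0. pose proof (sqrt_pos 2).
    replace (2 * (sqrt 2 * C / (k ^ 2 * Rabs k) / s) * PI / s) with ((2 * sqrt 2 * C * PI / (k ^ 2 * Rabs k) / s) * (1 / s)) by (field; lra).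
    rewrite <- (Rmult_1_r (2 * sqrt 2 * C * PI / (k ^ 2 * Rabs k) / s)) at 2.
    assert (0 <= 2 * sqrt 2 * C * PI) by (apply Rmult_le_pos; [apply Rmult_le_pos; [apply Rmult_le_pos|]|]; lra).
    assert (0 < k^2 * Rabs k) by (apply Rmult_lt_0_compat; lra).
    apply Rmult_le_compat_l. apply Rdiv_le_0_compat; [|lra]. apply Rdiv_le_0_compat; lra.
    unfold Rdiv. rewrite Rmult_1_l. rewrite <- Rinv_1. apply Rinv_le_contravar; lra. }
  eapply Rle_trans. apply (norm_triangle (K:=R_AbsRing) (V:=CV)).
  eapply Rle_trans. apply Rplus_le_compat_r. apply norm_minus_le.
  eapply Rle_trans. apply Rplus_le_compat_r. apply Rplus_le_compat; apply (norm_triangle (K:=R_AbsRing) (V:=CV)).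
  unfold q2, q4 in *.
  unfold KD. replace ((2 * (sqrt 2 / Rabs k * KP0 C l) + 2 * (sqrt 2 * (C / Rabs (k ^ 2) + C / Rabs (k ^ 3)) * PI) +
      2 * sqrt 2 * C * PI / (k ^ 2 * Rabs k)) / s) with
    (sqrt 2 / Rabs k * (KP0 C l / s) + sqrt 2 / Rabs k * (KP0 C l / s) + sqrt 2 * (C / Rabs (k^2) + C / Rabs (k^3)) * PI / s
     + sqrt 2 * (C / Rabs (k^2) + C / Rabs (k^3)) * PI / s + 2 * sqrt 2 * C * PI / (k^2 * Rabs k) / s).
  2:{ pose proof (Hk2' k Hk). pose proof (Hk3' k Hk). assert (0 < k^2 * Rabs k) by (apply Rmult_lt_0_compat; lra).
      field. repeat split; lra. }
  lra.
Qed.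

End Core5.

Section Core6.
Variables (g0 g1 g2 g3 gb : R -> R -> R) (c C k l : R).
Hypothesis H : Hyp2 g0 g1 g2 g3 gb c C.
Hypothesis Hk : k <> 0.
Hypothesis Hl : l <> 0.
Local Notation AF := (Af g0 g1 g2 g3 gb c C k H Hk).
Local Notation IS := (Is g0 k).

Lemma dbl_lim F : is_RInt_gen (V:=CV) (fun b => Cmult (AF b) (ep l b)) (Rbar_locally m_infty) (Rbar_locally p_infty) F ->
  filterlim (fun rs : R * R => RInt (V:=CV) (fun b => Cmult (IS (snd rs) b) (ep l b)) (- fst rs) (fst rs))
    (filter_prod (Rbar_locally p_infty) (Rbar_locally p_infty)) (locally (T:=CV) F).
Proof.
  intros HF.
  apply (proj2 (filterlim_locally (F := filter_prod (Rbar_locally p_infty) (Rbar_locally p_infty)) (U := CV) _ F)).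
  intros eps.
  destruct (lim_eps _ _ (gen_sym _ _ HF) (eps / 2)) as [R1 HR1]. destruct eps; simpl; lra.
  set (KD0 := KD C k l).
  apply (Filter_prod _ _ _ (fun r => Rmax R1 0 < r) (fun s => Rmax 2 (2 * Rabs KD0 / eps + 1) < s)).
  - exists (Rmax R1 0). auto.
  - exists (Rmax 2 (2 * Rabs KD0 / eps + 1)). auto.
  - intros r s Hr Hs. simpl.
    assert (Hr1 : R1 < r) by (pose proof (Rmax_l R1 0); lra).
    assert (Hr0 : 0 <= r) by (pose proof (Rmax_r R1 0); lra).
    assert (Hs2 : 2 <= s) by (pose proof (Rmax_l 2 (2 * Rabs KD0 / eps + 1)); lra).
    assert (Hs3 : 2 * Rabs KD0 / eps + 1 < s) by (pose proof (Rmax_r 2 (2 * Rabs KD0 / eps + 1)); lra).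
    apply (norm_compat1 (K:=R_AbsRing) (V:=CV)).
    eapply Rle_lt_trans. apply (norm_tri3 _ (RInt (V:=CV) (fun b => Cmult (AF b) (ep l b)) (- r) r)).
    rewrite norm_minus_sym.
    pose proof (int_Tep_bound g0 g1 g2 g3 gb c C k l H Hk Hl s r Hs2 Hr0) as B1. fold KD0 in B1.
    pose proof (HR1 r Hr1) as B2.
    assert (KD0 / s < eps / 2).
    { destruct eps as [e He]; simpl in *.
      assert (Rabs KD0 < e * s / 2).
      { assert (2 * Rabs KD0 / e < s - 1) by lra. apply (Rmult_lt_compat_l e) in H0; auto.
        replace (e * (2 * Rabs KD0 / e)) with (2 * Rabs KD0) in H0 by (field; lra). nra. }
      pose proof (Rle_abs KD0). apply (Rmult_lt_reg_r s). lra.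
      replace (KD0 / s * s) with KD0 by (field; lra). lra. }
    lra.
Qed.

Lemma F_bound F : is_RInt_gen (V:=CV) (fun b => Cmult (AF b) (ep l b)) (Rbar_locally m_infty) (Rbar_locally p_infty) F ->
  1 < Rabs c -> @norm _ CV F <= KA C k * PI / c^2.
Proof.
  intros HF Hc.
  pose proof (KA_nonneg g0 g1 g2 g3 gb c C k H Hk) as HKA.
  rewrite <- (minus_zero_r F).
  apply (lim_norm_le _ _ zero _ 0 (gen_sym _ _ HF)).
  intros r Hr. rewrite minus_zero_r.
  replace (KA C k * PI / c^2) with ((KA C k / Rabs c) * PI / Rabs c).
  2:{ rewrite <- (pow2_abs c). field. lra. }
  apply norm_int_quad; try lra.
  - apply Rdiv_le_0_compat; lra.
  - apply ex_Aep.
  - intros b _. rewrite norm_ep_mult.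
    assert (Hc2 : 1 < c^2) by (rewrite <- (pow2_abs c); nra).
    assert (Hr2 : 1 < b^2 + c^2) by nra.
    eapply Rle_trans. apply (A_bound _ _ _ _ _ _ _ _ H Hk b Hr2).
    fold (KA C k). rewrite pow2_abs.
    set (rho := sqrt (b^2 + c^2)).
    assert (Hrho : Rabs c <= rho) by (apply sqrt_ge_abs; nra).
    assert (Hrho2 : rho^2 = b^2 + c^2) by (apply pow2_sqrt; nra).
    replace (KA C k / Rabs c / (b^2 + c^2)) with (KA C k / (Rabs c * (b^2 + c^2))) by (field; split; lra).
    apply dle; auto. apply Rmult_lt_0_compat; lra.
    replace (rho^3) with (rho * rho^2) by ring. rewrite Hrho2. apply Rmult_le_compat_r; lra.
Qed.

End Core6.

Theorem core (g0 g1 g2 g3 gb : R -> R -> R) (c Cc k l : R) :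
  Hyp2 g0 g1 g2 g3 gb c Cc -> k <> 0 -> l <> 0 ->
  exists (A : R -> C) (F : C),
    (forall b, filterlim (fun r => RInt (V:=CV) (cex (fun a => g0 a b) k) (- r) r) (Rbar_locally p_infty) (locally (T:=CV) (A b))) /\
    (forall b, 1 < b^2 + c^2 -> @norm _ CV (A b) <= KA Cc k / sqrt (b^2 + c^2) ^ 3) /\
    filterlim (fun rs : R * R => RInt (V:=CV) (fun b => RInt (V:=CV) (fun a => Cmult (cex (fun a => g0 a b) k a) (ep l b)) (- snd rs) (snd rs)) (- fst rs) (fst rs))
      (filter_prod (Rbar_locally p_infty) (Rbar_locally p_infty)) (locally (T:=CV) F) /\
    is_RInt_gen (V:=CV) (fun b => Cmult (A b) (ep l b)) (Rbar_locally m_infty) (Rbar_locally p_infty) F /\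
    (1 < Rabs c -> @norm _ CV F <= KA Cc k * PI / c^2).
Proof.
  intros H Hk Hl.
  destruct (ex_F g0 g1 g2 g3 gb c Cc k l H Hk) as [F HF].
  exists (Af g0 g1 g2 g3 gb c Cc k H Hk), F.
  split; [|split; [|split; [|split]]].
  - intros b. apply (Lam_spec _ _ _ _ _ _ _ _ H Hk b).
  - intros b Hb. apply (A_bound _ _ _ _ _ _ _ _ H Hk b Hb).
  - eapply filterlim_ext. 2: apply (dbl_lim g0 g1 g2 g3 gb c Cc k l H Hk Hl F HF).
    intros [r s]. simpl. apply (RInt_ext (V:=CV)). intros x _.
    rewrite RInt_Cmult_r. reflexivity.
    apply ex_RInt_cont. intros; apply cont_cex. apply jc_slice1. apply (hj0 _ _ _ _ _ _ _ H).
  - exact HF.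
  - intros Hc. apply (F_bound g0 g1 g2 g3 gb c Cc k l H Hk F HF Hc).
Qed.

Definition cont3 (G : R -> R -> R -> R) : Prop :=
  forall x y z, continuous (fun p : R * R * R => G (fst (fst p)) (snd (fst p)) (snd p)) (x, y, z).

Lemma cont_pair {U V W : UniformSpace} (f : U -> V) (g : U -> W) x :
  continuous f x -> continuous g x -> continuous (fun t => (f t, g t)) x.
Proof.
  intros Hf Hg.
  apply (continuous_comp_2 (V:=V) (W:=W) (X:=prod_UniformSpace V W) f g (fun u v => (u, v))); auto.
  apply continuous_ext with (f := fun x : V * W => x). intros [a b]; reflexivity.
  apply continuous_id.
Qed.

Lemma jc_of3 G (u v w : R -> R -> R) : cont3 G -> jc u -> jc v -> jc w -> jc (fun a b => G (u a b) (v a b) (w a b)).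
Proof.
  intros HG Hu Hv Hw a b.
  apply (continuous_comp (U:=prod_UniformSpace R_UniformSpace R_UniformSpace)
    (V:=prod_UniformSpace (prod_UniformSpace R_UniformSpace R_UniformSpace) R_UniformSpace)
    (fun p : R * R => ((u (fst p) (snd p), v (fst p) (snd p)), w (fst p) (snd p)))
    (fun q : R * R * R => G (fst (fst q)) (snd (fst q)) (snd q))).
  - apply cont_pair. apply cont_pair. apply Hu. apply Hv. apply Hw.
  - simpl. apply HG.
Qed.

Lemma jc_a : jc (fun a b => a).
Proof. apply (jc_fun1 (fun a => a)). intros; apply continuous_id. Qed.
Lemma jc_b : jc (fun a b => b).
Proof. apply (jc_fun2 (fun a => a)). intros; apply continuous_id. Qed.
Lemma jc_c c : jc (fun a b => c).
Proof. intros a b. apply continuous_const. Qed.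

Lemma sqrt_pow3 Q : 0 <= Q -> sqrt Q ^ 3 = Q * sqrt Q.
Proof. intros H. replace (sqrt Q ^ 3) with (sqrt Q ^ 2 * sqrt Q) by ring. rewrite pow2_sqrt; auto. Qed.
Lemma sqrt_pow4 Q : 0 <= Q -> sqrt Q ^ 4 = Q ^ 2.
Proof. intros H. replace (sqrt Q ^ 4) with ((sqrt Q ^ 2)^2) by ring. rewrite pow2_sqrt; auto. Qed.

Lemma mk_hyp2 (G0 G1 G2 G3 GB : R -> R -> R -> R) (u v w : R -> R -> R) (c C : R) :
  0 <= C -> cont3 G0 -> cont3 G1 -> cont3 G2 -> cont3 G3 -> cont3 GB -> jc u -> jc v -> jc w ->
  (forall a b, (u a b)^2 + (v a b)^2 + (w a b)^2 = a^2 + b^2 + c^2) ->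
  (forall a b, is_derive (fun a' => G0 (u a' b) (v a' b) (w a' b)) a (G1 (u a b) (v a b) (w a b))) ->
  (forall a b, is_derive (fun a' => G1 (u a' b) (v a' b) (w a' b)) a (G2 (u a b) (v a b) (w a b))) ->
  (forall a b, is_derive (fun a' => G2 (u a' b) (v a' b) (w a' b)) a (G3 (u a b) (v a b) (w a b))) ->
  (forall a b, is_derive (fun b' => G0 (u a b') (v a b') (w a b')) b (GB (u a b) (v a b) (w a b))) ->
  (forall x y z, 1 < norm3 x y z -> Rabs (G0 x y z) <= C / norm3 x y z /\ Rabs (G1 x y z) <= C / norm3 x y z ^ 2 /\
      Rabs (G2 x y z) <= C / norm3 x y z ^ 3 /\ Rabs (G3 x y z) <= C / norm3 x y z ^ 4 /\ Rabs (GB x y z) <= C / norm3 x y z ^ 2) ->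
  Hyp2 (fun a b => G0 (u a b) (v a b) (w a b)) (fun a b => G1 (u a b) (v a b) (w a b))
       (fun a b => G2 (u a b) (v a b) (w a b)) (fun a b => G3 (u a b) (v a b) (w a b))
       (fun a b => GB (u a b) (v a b) (w a b)) c C.
Proof.
  intros HC C0 C1 C2 C3 CB Ju Jv Jw Hsq D1 D2 D3 DB HB.
  assert (Hn : forall a b, norm3 (u a b) (v a b) (w a b) = sqrt (a^2 + b^2 + c^2)).
  { intros a b. unfold norm3. rewrite Hsq. reflexivity. }
  assert (Hg : forall a b, 1 < a^2+b^2+c^2 -> 1 < norm3 (u a b) (v a b) (w a b)).
  { intros a b Hq. rewrite Hn. rewrite <- sqrt_1. apply sqrt_lt_1_alt. lra. }
  constructor; auto; try (apply jc_of3; auto).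
  - intros a b Hq. destruct (HB _ _ _ (Hg a b Hq)) as [B _]. rewrite Hn in B. exact B.
  - intros a b Hq. destruct (HB _ _ _ (Hg a b Hq)) as [_ [B _]]. rewrite Hn, pow2_sqrt in B by lra. exact B.
  - intros a b Hq. destruct (HB _ _ _ (Hg a b Hq)) as [_ [_ [B _]]]. rewrite Hn, sqrt_pow3 in B by lra. exact B.
  - intros a b Hq. destruct (HB _ _ _ (Hg a b Hq)) as [_ [_ [_ [B _]]]]. rewrite Hn, sqrt_pow4 in B by lra. exact B.
  - intros a b Hq. destruct (HB _ _ _ (Hg a b Hq)) as [_ [_ [_ [_ B]]]]. rewrite Hn, pow2_sqrt in B by lra. exact B.
Qed.

Lemma D_x f l x y z : smooth3 f -> is_derive (fun t => iter_pd3 l f t y z) x (iter_pd3 (Defs.Dx :: l) f x y z).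
Proof. intros Hs. destruct (Hs l x y z) as [_ [H _]]. apply Derive_correct in H. exact H. Qed.
Lemma D_y f l x y z : smooth3 f -> is_derive (fun t => iter_pd3 l f x t z) y (iter_pd3 (Defs.Dy :: l) f x y z).
Proof. intros Hs. destruct (Hs l x y z) as [_ [_ [H _]]]. apply Derive_correct in H. exact H. Qed.
Lemma D_z f l x y z : smooth3 f -> is_derive (fun t => iter_pd3 l f x y t) z (iter_pd3 (Defs.Dz :: l) f x y z).
Proof. intros Hs. destruct (Hs l x y z) as [_ [_ [_ H]]]. apply Derive_correct in H. exact H. Qed.

Lemma cont3_of f l : smooth3 f -> cont3 (iter_pd3 l f).
Proof. intros Hs x y z. apply (Hs l x y z). Qed.

Lemma bnd_le (C0 C n : R) : Rabs C0 <= C -> 0 < n -> C0 / n <= C / n.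
Proof. intros H Hn. apply div_le_r; auto. pose proof (Rle_abs C0). lra. Qed.

Lemma bounds3 f : very_moderate_decrease3 f -> cond_v3 f ->
  exists C, 0 <= C /\ forall x y z, 1 < norm3 x y z ->
    Rabs (f x y z) <= C / norm3 x y z /\
    forall d, Rabs (iter_pd3 (d :: nil) f x y z) <= C / norm3 x y z ^ 2 /\
              Rabs (iter_pd3 (d :: d :: nil) f x y z) <= C / norm3 x y z ^ 3 /\
              Rabs (iter_pd3 (d :: d :: d :: nil) f x y z) <= C / norm3 x y z ^ 4.
Proof.
  intros [C0 H0] Hv.
  destruct (Hv 1%nat 0%nat 0%nat ltac:(simpl; lia)) as [Cx1 Hx1].
  destruct (Hv 2%nat 0%nat 0%nat ltac:(simpl; lia)) as [Cx2 Hx2].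
  destruct (Hv 3%nat 0%nat 0%nat ltac:(simpl; lia)) as [Cx3 Hx3].
  destruct (Hv 0%nat 1%nat 0%nat ltac:(simpl; lia)) as [Cy1 Hy1].
  destruct (Hv 0%nat 2%nat 0%nat ltac:(simpl; lia)) as [Cy2 Hy2].
  destruct (Hv 0%nat 3%nat 0%nat ltac:(simpl; lia)) as [Cy3 Hy3].
  destruct (Hv 0%nat 0%nat 1%nat ltac:(simpl; lia)) as [Cz1 Hz1].
  destruct (Hv 0%nat 0%nat 2%nat ltac:(simpl; lia)) as [Cz2 Hz2].
  destruct (Hv 0%nat 0%nat 3%nat ltac:(simpl; lia)) as [Cz3 Hz3].
  set (C := Rabs C0 + Rabs Cx1 + Rabs Cx2 + Rabs Cx3 + Rabs Cy1 + Rabs Cy2 + Rabs Cy3 + Rabs Cz1 + Rabs Cz2 + Rabs Cz3).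
  assert (Hs : forall t, t = C0 \/ t = Cx1 \/ t = Cx2 \/ t = Cx3 \/ t = Cy1 \/ t = Cy2 \/ t = Cy3 \/ t = Cz1 \/ t = Cz2 \/ t = Cz3 -> Rabs t <= C).
  { intros t Ht. unfold C.
    pose proof (Rabs_pos C0). pose proof (Rabs_pos Cx1). pose proof (Rabs_pos Cx2). pose proof (Rabs_pos Cx3).
    pose proof (Rabs_pos Cy1). pose proof (Rabs_pos Cy2). pose proof (Rabs_pos Cy3).
    pose proof (Rabs_pos Cz1). pose proof (Rabs_pos Cz2). pose proof (Rabs_pos Cz3).
    repeat destruct Ht as [Ht|Ht]; subst; lra. }
  exists C. split. { pose proof (Hs C0 ltac:(tauto)). pose proof (Rabs_pos C0). lra. }
  intros x y z Hn.
  assert (P : forall n, 0 < norm3 x y z ^ n) by (intros; apply pow_lt; lra).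
  split. { eapply Rle_trans. apply H0; auto. apply bnd_le; [apply Hs; tauto | lra]. }
  intros d. destruct d.
  - specialize (Hx1 x y z Hn). specialize (Hx2 x y z Hn). specialize (Hx3 x y z Hn). simpl in Hx1, Hx2, Hx3.
    repeat split; [eapply Rle_trans; [apply Hx1|] | eapply Rle_trans; [apply Hx2|] | eapply Rle_trans; [apply Hx3|]];
      (apply bnd_le; [apply Hs; tauto | apply P]).
  - specialize (Hy1 x y z Hn). specialize (Hy2 x y z Hn). specialize (Hy3 x y z Hn). simpl in Hy1, Hy2, Hy3.
    repeat split; [eapply Rle_trans; [apply Hy1|] | eapply Rle_trans; [apply Hy2|] | eapply Rle_trans; [apply Hy3|]];
      (apply bnd_le; [apply Hs; tauto | apply P]).
  - specialize (Hz1 x y z Hn). specialize (Hz2 x y z Hn). specialize (Hz3 x y z Hn). simpl in Hz1, Hz2, Hz3.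
    repeat split; [eapply Rle_trans; [apply Hz1|] | eapply Rle_trans; [apply Hz2|] | eapply Rle_trans; [apply Hz3|]];
      (apply bnd_le; [apply Hs; tauto | apply P]).
Qed.

Lemma jc_plus f g : jc f -> jc g -> jc (fun a b => f a b + g a b).
Proof. intros Hf Hg a b. apply (continuous_plus (V:=R_NormedModule) (fun p : R * R => f (fst p) (snd p)) (fun p : R * R => g (fst p) (snd p))); auto. Qed.
Lemma jc_minus f g : jc f -> jc g -> jc (fun a b => f a b - g a b).
Proof. intros Hf Hg a b. apply (continuous_minus (V:=R_NormedModule) (fun p : R * R => f (fst p) (snd p)) (fun p : R * R => g (fst p) (snd p))); auto. Qed.

Ltac jcs := repeat match goal with
 | |- jc (fun a b => _ + _) => apply jc_plus
 | |- jc (fun a b => _ - _) => apply jc_minus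
 | |- jc (fun a b => _ * _) => apply jc_mul
 | |- jc (fun a b => - _) => apply jc_opp
 | |- jc (fun a b => cos (?k * a)) => apply (jc_fun1 (fun a => cos (k * a))); intros; apply cont_cos
 | |- jc (fun a b => sin (?k * a)) => apply (jc_fun1 (fun a => sin (k * a))); intros; apply cont_sin
 | |- jc (fun a b => cos (?k * b)) => apply (jc_fun2 (fun b => cos (k * b))); intros; apply cont_cos
 | |- jc (fun a b => sin (?k * b)) => apply (jc_fun2 (fun b => sin (k * b))); intros; apply cont_sin
 | |- jc (fun a b => ?c) => apply (jc_c c)
 | |- jc _ => assumption
end.

Section FubC.
Variables (g g1 gb : R -> R -> R) (k l : R).
Hypothesis Da : forall a b, is_derive (fun a' => g a' b) a (g1 a b).
Hypothesis Db : forall a b, is_derive (fun b' => g a b') b (gb a b).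
Hypothesis J0 : jc g.
Hypothesis J1 : jc g1.
Hypothesis Jb : jc gb.

Definition Hc a b : C := Cmult (Cmult (RtoC (g a b)) (expi (- (k * a)))) (expi (- (l * b))).
Definition hf a b := g a b * (cos (k*a) * cos (l*b) - sin (k*a) * sin (l*b)).
Definition hs a b := - (g a b * (cos (k*a) * sin (l*b) + sin (k*a) * cos (l*b))).
Definition hfa a b := g1 a b * (cos (k*a) * cos (l*b) - sin (k*a) * sin (l*b)) + g a b * (- (k * sin (k*a)) * cos (l*b) - k * cos (k*a) * sin (l*b)).
Definition hfb a b := gb a b * (cos (k*a) * cos (l*b) - sin (k*a) * sin (l*b)) + g a b * (- (cos (k*a) * (l * sin (l*b))) - sin (k*a) * (l * cos (l*b))).
Definition hsa a b := - (g1 a b * (cos (k*a) * sin (l*b) + sin (k*a) * cos (l*b)) + g a b * (- (k * sin (k*a)) * sin (l*b) + k * cos (k*a) * cos (l*b))).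
Definition hsb a b := - (gb a b * (cos (k*a) * sin (l*b) + sin (k*a) * cos (l*b)) + g a b * (cos (k*a) * (l * cos (l*b)) - sin (k*a) * (l * sin (l*b)))).

Lemma Hc_eq a b : Hc a b = ((hf a b, hs a b) : C).
Proof. unfold Hc, hf, hs, expi, Cmult, RtoC; simpl. rewrite !cos_neg, !sin_neg. f_equal; ring. Qed.

Lemma D_hf_a a b : is_derive (fun a' => hf a' b) a (hfa a b).
Proof. unfold hf, hfa. auto_derive. eexists; apply Da. match goal with |- context [Derive ?f a] => rewrite (is_derive_unique f a (g1 a b) (Da a b)) end. ring. Qed.
Lemma D_hf_b a b : is_derive (fun b' => hf a b') b (hfb a b).
Proof. unfold hf, hfb. auto_derive. eexists; apply Db. match goal with |- context [Derive ?f b] => rewrite (is_derive_unique f b (gb a b) (Db a b)) end. ring. Qed.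
Lemma D_hs_a a b : is_derive (fun a' => hs a' b) a (hsa a b).
Proof. unfold hs, hsa. auto_derive. eexists; apply Da. match goal with |- context [Derive ?f a] => rewrite (is_derive_unique f a (g1 a b) (Da a b)) end. ring. Qed.
Lemma D_hs_b a b : is_derive (fun b' => hs a b') b (hsb a b).
Proof. unfold hs, hsb. auto_derive. eexists; apply Db. match goal with |- context [Derive ?f b] => rewrite (is_derive_unique f b (gb a b) (Db a b)) end. ring. Qed.

Lemma jc_hf : jc hf. Proof. unfold hf. jcs. Qed.
Lemma jc_hs : jc hs. Proof. unfold hs. jcs. Qed.
Lemma jc_hfa : jc hfa. Proof. unfold hfa. jcs. Qed.
Lemma jc_hfb : jc hfb. Proof. unfold hfb. jcs. Qed.
Lemma jc_hsa : jc hsa. Proof. unfold hsa. jcs. Qed.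
Lemma jc_hsb : jc hsb. Proof. unfold hsb. jcs. Qed.

Lemma inner_a α β b : RInt (V:=CV) (fun a => Hc a b) α β = ((RInt (fun a => hf a b) α β, RInt (fun a => hs a b) α β) : C).
Proof.
  rewrite (RInt_ext (V:=CV) _ (fun a => ((hf a b, hs a b) : C))) by (intros; apply Hc_eq).
  rewrite RInt_C_eq; simpl; auto.
  apply (exRInt_slice1 hf). apply jc_hf. apply (exRInt_slice1 hs). apply jc_hs.
Qed.

Lemma inner_b γ δ a : RInt (V:=CV) (fun b => Hc a b) γ δ = ((RInt (fun b => hf a b) γ δ, RInt (fun b => hs a b) γ δ) : C).
Proof.
  rewrite (RInt_ext (V:=CV) _ (fun b => ((hf a b, hs a b) : C))) by (intros; apply Hc_eq).
  rewrite RInt_C_eq; simpl; auto.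
  apply (exRInt_slice1 (fun b a => hf a b)). apply jc_swap, jc_hf.
  apply (exRInt_slice1 (fun b a => hs a b)). apply jc_swap, jc_hs.
Qed.

Lemma fubiniC α β γ δ :
  RInt (V:=CV) (fun b => RInt (V:=CV) (fun a => Hc a b) α β) γ δ = RInt (V:=CV) (fun a => RInt (V:=CV) (fun b => Hc a b) γ δ) α β.
Proof.
  rewrite (RInt_ext (V:=CV) _ (fun b => ((RInt (fun a => hf a b) α β, RInt (fun a => hs a b) α β) : C))) by (intros; apply inner_a).
  rewrite (RInt_ext (V:=CV) (fun a => RInt (V:=CV) (fun b => Hc a b) γ δ) (fun a => ((RInt (fun b => hf a b) γ δ, RInt (fun b => hs a b) γ δ) : C))) by (intros; apply inner_b).
  rewrite !RInt_C_eq; simpl.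
  - f_equal.
    + apply (fubini hf hfa hfb). apply D_hf_a. apply D_hf_b. apply jc_hf. apply jc_hfa. apply jc_hfb.
    + apply (fubini hs hsa hsb). apply D_hs_a. apply D_hs_b. apply jc_hs. apply jc_hsa. apply jc_hsb.
  - apply (ex_RInt_continuous (V:=R_CompleteNormedModule)). intros; apply (PCR_cont (fun b a => hf a b) (fun b a => hfa a b)).
    intros; apply D_hf_a. apply jc_swap, jc_hf. apply jc_swap, jc_hfa.
  - apply (ex_RInt_continuous (V:=R_CompleteNormedModule)). intros; apply (PCR_cont (fun b a => hs a b) (fun b a => hsa a b)).
    intros; apply D_hs_a. apply jc_swap, jc_hs. apply jc_swap, jc_hsa.
  - apply (ex_RInt_continuous (V:=R_CompleteNormedModule)). intros; apply (PCR_cont hf hfb).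
    apply D_hf_b. apply jc_hf. apply jc_hfb.
  - apply (ex_RInt_continuous (V:=R_CompleteNormedModule)). intros; apply (PCR_cont hs hsb).
    apply D_hs_b. apply jc_hs. apply jc_hsb.
Qed.

End FubC.

Lemma filterlim_swap (P : R * R -> C) L :
  filterlim P (filter_prod (Rbar_locally p_infty) (Rbar_locally p_infty)) (locally (T:=CV) L) ->
  filterlim (fun rs => P (snd rs, fst rs)) (filter_prod (Rbar_locally p_infty) (Rbar_locally p_infty)) (locally (T:=CV) L).
Proof.
  intros H Q HQ. specialize (H Q HQ). destruct H as [A B HA HB HAB].
  apply (Filter_prod _ _ _ B A HB HA). intros x y Hx Hy. simpl. apply HAB; auto.
Qed.

Definition CoreP (g0 : R -> R -> R) (c Cc k l : R) (A : R -> C) (F : C) : Prop :=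
    (forall b, filterlim (fun r => RInt (V:=CV) (cex (fun a => g0 a b) k) (- r) r) (Rbar_locally p_infty) (locally (T:=CV) (A b))) /\
    (forall b, 1 < b^2 + c^2 -> @norm _ CV (A b) <= KA Cc k / sqrt (b^2 + c^2) ^ 3) /\
    filterlim (fun rs : R * R => RInt (V:=CV) (fun b => RInt (V:=CV) (fun a => Cmult (cex (fun a => g0 a b) k a) (ep l b)) (- snd rs) (snd rs)) (- fst rs) (fst rs))
      (filter_prod (Rbar_locally p_infty) (Rbar_locally p_infty)) (locally (T:=CV) F) /\
    is_RInt_gen (V:=CV) (fun b => Cmult (A b) (ep l b)) (Rbar_locally m_infty) (Rbar_locally p_infty) F /\
    (1 < Rabs c -> @norm _ CV F <= KA Cc k * PI / c^2).

Lemma core_fun (G0 G1 G2 G3 GB : R -> R -> R -> R) (Cc k l : R) :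
  (forall c, Hyp2 (G0 c) (G1 c) (G2 c) (G3 c) (GB c) c Cc) -> k <> 0 -> l <> 0 ->
  exists (AA : R -> R -> C) (FF : R -> C), forall c, CoreP (G0 c) c Cc k l (AA c) (FF c).
Proof.
  intros H Hk Hl.
  assert (E : forall c, exists p : (R -> C) * C, CoreP (G0 c) c Cc k l (fst p) (snd p)).
  { intros c. destruct (core _ _ _ _ _ c Cc k l (H c) Hk Hl) as [A [F HAF]]. exists (A, F). exact HAF. }
  exists (fun c => fst (proj1_sig (constructive_indefinite_description _ (E c)))).
  exists (fun c => snd (proj1_sig (constructive_indefinite_description _ (E c)))).
  intros c. destruct (constructive_indefinite_description _ (E c)) as [p Hp]. exact Hp.
Qed.

Lemma swapP (g g1 gb : R -> R -> R) k l r s :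
  (forall a b, is_derive (fun a' => g a' b) a (g1 a b)) -> (forall a b, is_derive (fun b' => g a b') b (gb a b)) ->
  jc g -> jc g1 -> jc gb ->
  RInt (V:=CV) (fun b => RInt (V:=CV) (fun a => Cmult (cex (fun a => g a b) k a) (ep l b)) (- s) s) (- r) r =
  RInt (V:=CV) (fun b => RInt (V:=CV) (fun a => Cmult (cex (fun a => g b a) l a) (ep k b)) (- r) r) (- s) s.
Proof.
  intros Da Db J0 J1 Jb.
  transitivity (RInt (V:=CV) (fun b => RInt (V:=CV) (fun a => Hc g k l a b) (- s) s) (- r) r).
  { apply (RInt_ext (V:=CV)). intros b _. apply (RInt_ext (V:=CV)). intros a _. rewrite cex_ep. reflexivity. }
  rewrite (fubiniC g g1 gb k l Da Db J0 J1 Jb).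
  apply (RInt_ext (V:=CV)). intros b _. apply (RInt_ext (V:=CV)). intros a _. rewrite cex_ep.
  unfold Hc, ep. destruct (expi (- (k * b))), (expi (- (l * a))). unfold Cmult, RtoC; simpl. f_equal; ring.
Qed.

Lemma lim_unique (h : R -> C) L1 L2 :
  filterlim h (Rbar_locally p_infty) (locally (T:=CV) L1) -> filterlim h (Rbar_locally p_infty) (locally (T:=CV) L2) -> L1 = L2.
Proof. intros H1 H2. apply (filterlim_locally_unique (K:=R_AbsRing) (V:=CV) h L1 L2 H1 H2). Qed.

Lemma lim_unique2 (h : R * R -> C) L1 L2 :
  filterlim h (filter_prod (Rbar_locally p_infty) (Rbar_locally p_infty)) (locally (T:=CV) L1) ->
  filterlim h (filter_prod (Rbar_locally p_infty) (Rbar_locally p_infty)) (locally (T:=CV) L2) -> L1 = L2.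
Proof.
  intros H1 H2. apply (@filterlim_locally_unique _ R_AbsRing CV (filter_prod (Rbar_locally p_infty) (Rbar_locally p_infty))
    (Proper_StrongProper _ (@Hierarchy.filter_prod_proper _ _ _ _ (Rbar_locally_filter _) (Rbar_locally_filter _))) h L1 L2 H1 H2).
Qed.

Lemma to_ft_lim1 (u : R -> R) k L :
  filterlim (fun r => RInt (V:=CV) (cex u k) (- r) r) (Rbar_locally p_infty) (locally (T:=CV) L) -> ft_lim1 u k L.
Proof.
  intros H. unfold ft_lim1.
  replace (fun t => Cmult (RtoC (u t)) (expi (- (k * t)))) with (cex u k). exact H.
  apply functional_extensionality. intros t. rewrite cex_ep. reflexivity.
Qed.

Lemma to_ft_lim2 (g : R -> R -> R) k l L :
  filterlim (fun rs : R * R => RInt (V:=CV) (fun b => RInt (V:=CV) (fun a => Cmult (cex (fun a => g a b) k a) (ep l b)) (- snd rs) (snd rs)) (- fst rs) (fst rs))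
      (filter_prod (Rbar_locally p_infty) (Rbar_locally p_infty)) (locally (T:=CV) L) -> ft_lim2 g k l L.
Proof.
  intros H. unfold ft_lim2.
  eapply filterlim_ext; [|exact H]. intros [r s]. simpl.
  apply (RInt_ext (V:=CV)). intros b _. apply (RInt_ext (V:=CV)). intros a _. rewrite cex_ep. reflexivity.
Qed.

Lemma to_md2 (AA : R -> R -> C) K :
  (forall c b, 1 < b^2 + c^2 -> @norm _ CV (AA c b) <= K / sqrt (b^2 + c^2) ^ 3) ->
  moderate_decrease2C 3 (fun u v => AA v u).
Proof.
  intros H. exists K. intros u v Huv. rewrite <- normCmod. unfold norm2 in *.
  apply H. assert (Hs : 0 <= u^2 + v^2) by nra.
  destruct (Rlt_or_le 1 (u^2+v^2)); auto. exfalso.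
  assert (sqrt (u^2+v^2) <= 1) by (rewrite <- sqrt_1; apply sqrt_le_1_alt; auto). lra.
Qed.

Lemma to_md1 (FF : R -> C) K : (forall c, 1 < Rabs c -> @norm _ CV (FF c) <= K / c^2) -> moderate_decrease1 FF.
Proof. intros H. exists K. intros t Ht. rewrite <- normCmod. apply H; auto. Qed.

Section Fin.
Variable f : R -> R -> R -> R.
Hypothesis Hs : smooth3 f.
Variable Cc : R.
Hypothesis HC : 0 <= Cc.
Hypothesis HB : forall x y z, 1 < norm3 x y z ->
    Rabs (f x y z) <= Cc / norm3 x y z /\
    forall d, Rabs (iter_pd3 (d :: nil) f x y z) <= Cc / norm3 x y z ^ 2 /\
              Rabs (iter_pd3 (d :: d :: nil) f x y z) <= Cc / norm3 x y z ^ 3 /\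
              Rabs (iter_pd3 (d :: d :: d :: nil) f x y z) <= Cc / norm3 x y z ^ 4.

Notation I0 := (iter_pd3 nil f).
Notation I1 d := (iter_pd3 (d :: nil) f).
Notation I2 d := (iter_pd3 (d :: d :: nil) f).
Notation I3 d := (iter_pd3 (d :: d :: d :: nil) f).

Ltac dtac := match goal with
 | |- is_derive (fun t => iter_pd3 ?l ?g t ?y ?z) _ _ => apply (D_x g l); exact Hs
 | |- is_derive (fun t => iter_pd3 ?l ?g ?x t ?z) _ _ => apply (D_y g l); exact Hs
 | |- is_derive (fun t => iter_pd3 ?l ?g ?x ?y t) _ _ => apply (D_z g l); exact Hs
 end.

Ltac fin_case :=
  [ > exact HC
  | apply cont3_of; exact Hs | apply cont3_of; exact Hs | apply cont3_of; exact Hs | apply cont3_of; exact Hs | apply cont3_of; exact Hs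
  | first [apply jc_a | apply jc_b | apply jc_c] | first [apply jc_a | apply jc_b | apply jc_c] | first [apply jc_a | apply jc_b | apply jc_c]
  | intros; ring
  | intros a b; cbv beta; dtac
  | intros a b; cbv beta; dtac
  | intros a b; cbv beta; dtac
  | intros a b; cbv beta; dtac
  | intros x y z Hn; destruct (HB x y z Hn) as [B0 Bd];
    destruct (Bd Defs.Dx) as [X1 [X2 X3]]; destruct (Bd Defs.Dy) as [Y1 [Y2 Y3]]; destruct (Bd Defs.Dz) as [Z1 [Z2 Z3]];
    repeat split; assumption ].

Lemma hXY c : Hyp2 (fun a b => I0 a b c) (fun a b => I1 Defs.Dx a b c) (fun a b => I2 Defs.Dx a b c) (fun a b => I3 Defs.Dx a b c) (fun a b => I1 Defs.Dy a b c) c Cc.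
Proof. apply (mk_hyp2 I0 (I1 Defs.Dx) (I2 Defs.Dx) (I3 Defs.Dx) (I1 Defs.Dy) (fun a b => a) (fun a b => b) (fun a b => c)); fin_case. Qed.
Lemma hYX c : Hyp2 (fun a b => I0 b a c) (fun a b => I1 Defs.Dy b a c) (fun a b => I2 Defs.Dy b a c) (fun a b => I3 Defs.Dy b a c) (fun a b => I1 Defs.Dx b a c) c Cc.
Proof. apply (mk_hyp2 I0 (I1 Defs.Dy) (I2 Defs.Dy) (I3 Defs.Dy) (I1 Defs.Dx) (fun a b => b) (fun a b => a) (fun a b => c)); fin_case. Qed.
Lemma hXZ c : Hyp2 (fun a b => I0 a c b) (fun a b => I1 Defs.Dx a c b) (fun a b => I2 Defs.Dx a c b) (fun a b => I3 Defs.Dx a c b) (fun a b => I1 Defs.Dz a c b) c Cc.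
Proof. apply (mk_hyp2 I0 (I1 Defs.Dx) (I2 Defs.Dx) (I3 Defs.Dx) (I1 Defs.Dz) (fun a b => a) (fun a b => c) (fun a b => b)); fin_case. Qed.
Lemma hZX c : Hyp2 (fun a b => I0 b c a) (fun a b => I1 Defs.Dz b c a) (fun a b => I2 Defs.Dz b c a) (fun a b => I3 Defs.Dz b c a) (fun a b => I1 Defs.Dx b c a) c Cc.
Proof. apply (mk_hyp2 I0 (I1 Defs.Dz) (I2 Defs.Dz) (I3 Defs.Dz) (I1 Defs.Dx) (fun a b => b) (fun a b => c) (fun a b => a)); fin_case. Qed.
Lemma hYZ c : Hyp2 (fun a b => I0 c a b) (fun a b => I1 Defs.Dy c a b) (fun a b => I2 Defs.Dy c a b) (fun a b => I3 Defs.Dy c a b) (fun a b => I1 Defs.Dz c a b) c Cc.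
Proof. apply (mk_hyp2 I0 (I1 Defs.Dy) (I2 Defs.Dy) (I3 Defs.Dy) (I1 Defs.Dz) (fun a b => c) (fun a b => a) (fun a b => b)); fin_case. Qed.
Lemma hZY c : Hyp2 (fun a b => I0 c b a) (fun a b => I1 Defs.Dz c b a) (fun a b => I2 Defs.Dz c b a) (fun a b => I3 Defs.Dz c b a) (fun a b => I1 Defs.Dy c b a) c Cc.
Proof. apply (mk_hyp2 I0 (I1 Defs.Dz) (I2 Defs.Dz) (I3 Defs.Dz) (I1 Defs.Dy) (fun a b => c) (fun a b => b) (fun a b => a)); fin_case. Qed.

End Fin.

Theorem lemma17 (f : R -> R -> R -> R)
  (Hf : quasi_normal3 f \/ quasi_split_normal3 f)
  (k1 k2 k3 : R) (Hk1 : k1 <> 0) (Hk2 : k2 <> 0) (Hk3 : k3 <> 0) :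
  exists (A : R -> R -> C) (B : R -> R -> C) (Cf : R -> R -> C)
         (F : R -> C) (G : R -> C) (H : R -> C),
    (forall y z, ft_lim1 (fun x => f x y z) k1 (A y z)) /\
    (forall x z, ft_lim1 (fun y => f x y z) k2 (B x z)) /\
    (forall x y, ft_lim1 (fun z => f x y z) k3 (Cf x y)) /\
    moderate_decrease2C 3 A /\ moderate_decrease2C 3 B /\ moderate_decrease2C 3 Cf /\
    (forall z, ft_lim2 (fun x y => f x y z) k1 k2 (F z)) /\
    (forall y, ft_lim2 (fun x z => f x y z) k1 k3 (G y)) /\
    (forall x, ft_lim2 (fun y z => f x y z) k2 k3 (H x)) /\
    moderate_decrease1 F /\ moderate_decrease1 G /\ moderate_decrease1 H /\
    (forall z, ft_int (fun y => A y z) k2 (F z) /\ ft_int (fun x => B x z) k1 (F z)) /\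
    (forall y, ft_int (fun z => A y z) k3 (G y) /\ ft_int (fun x => Cf x y) k1 (G y)) /\
    (forall x, ft_int (fun z => B x z) k3 (H x) /\ ft_int (fun y => Cf x y) k2 (H x)).
Proof.
  assert (Hsm : smooth3 f /\ very_moderate_decrease3 f /\ cond_v3 f).
  { destruct Hf as [[H1 [_ [_ [_ [H5 [H6 _]]]]]] | [H1 [_ [_ [_ [H5 [H6 _]]]]]]]; auto. }
  destruct Hsm as [Hs [Hvm Hv]].
  destruct (bounds3 f Hvm Hv) as [Cc [HC HB]].
  destruct (core_fun _ _ _ _ _ Cc k1 k2 (hXY f Hs Cc HC HB) Hk1 Hk2) as [Axy [Fxy Pxy]].
  destruct (core_fun _ _ _ _ _ Cc k2 k1 (hYX f Hs Cc HC HB) Hk2 Hk1) as [Ayx [Fyx Pyx]].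
  destruct (core_fun _ _ _ _ _ Cc k1 k3 (hXZ f Hs Cc HC HB) Hk1 Hk3) as [Axz [Fxz Pxz]].
  destruct (core_fun _ _ _ _ _ Cc k3 k1 (hZX f Hs Cc HC HB) Hk3 Hk1) as [Azx [Fzx Pzx]].
  destruct (core_fun _ _ _ _ _ Cc k2 k3 (hYZ f Hs Cc HC HB) Hk2 Hk3) as [Ayz [Fyz Pyz]].
  destruct (core_fun _ _ _ _ _ Cc k3 k2 (hZY f Hs Cc HC HB) Hk3 Hk2) as [Azy [Fzy Pzy]].
  assert (U1 : forall y z, Axz y z = Axy z y).
  { intros y z. exact (lim_unique _ _ _ (proj1 (Pxz y) z) (proj1 (Pxy z) y)). }
  assert (U2 : forall x z, Ayz x z = Ayx z x).
  { intros x z. exact (lim_unique _ _ _ (proj1 (Pyz x) z) (proj1 (Pyx z) x)). }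
  assert (U3 : forall x y, Azy x y = Azx y x).
  { intros x y. exact (lim_unique _ _ _ (proj1 (Pzy x) y) (proj1 (Pzx y) x)). }
  assert (V1 : forall z, Fyx z = Fxy z).
  { intros z. pose proof (hXY f Hs Cc HC HB z) as HH.
    pose proof (filterlim_swap _ _ (proj1 (proj2 (proj2 (Pyx z))))) as L1.
    refine (lim_unique2 _ _ _ _ (proj1 (proj2 (proj2 (Pxy z))))).
    eapply filterlim_ext; [| exact L1].
    intros [r s]. simpl. symmetry.
    apply (swapP _ _ _ k1 k2 r s (hd1 _ _ _ _ _ _ _ HH) (hdb _ _ _ _ _ _ _ HH) (hj0 _ _ _ _ _ _ _ HH) (hj1 _ _ _ _ _ _ _ HH) (hjb _ _ _ _ _ _ _ HH)). }
  assert (V2 : forall y, Fzx y = Fxz y).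
  { intros y. pose proof (hXZ f Hs Cc HC HB y) as HH.
    pose proof (filterlim_swap _ _ (proj1 (proj2 (proj2 (Pzx y))))) as L1.
    refine (lim_unique2 _ _ _ _ (proj1 (proj2 (proj2 (Pxz y))))).
    eapply filterlim_ext; [| exact L1].
    intros [r s]. simpl. symmetry.
    apply (swapP _ _ _ k1 k3 r s (hd1 _ _ _ _ _ _ _ HH) (hdb _ _ _ _ _ _ _ HH) (hj0 _ _ _ _ _ _ _ HH) (hj1 _ _ _ _ _ _ _ HH) (hjb _ _ _ _ _ _ _ HH)). }
  assert (V3 : forall x, Fzy x = Fyz x).
  { intros x. pose proof (hYZ f Hs Cc HC HB x) as HH.
    pose proof (filterlim_swap _ _ (proj1 (proj2 (proj2 (Pzy x))))) as L1.
    refine (lim_unique2 _ _ _ _ (proj1 (proj2 (proj2 (Pyz x))))).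
    eapply filterlim_ext; [| exact L1].
    intros [r s]. simpl. symmetry.
    apply (swapP _ _ _ k2 k3 r s (hd1 _ _ _ _ _ _ _ HH) (hdb _ _ _ _ _ _ _ HH) (hj0 _ _ _ _ _ _ _ HH) (hj1 _ _ _ _ _ _ _ HH) (hjb _ _ _ _ _ _ _ HH)). }
  exists (fun y z => Axy z y), (fun x z => Ayx z x), (fun x y => Azx y x), Fxy, Fxz, Fyz.
  split; [|split; [|split; [|split; [|split; [|split; [|split; [|split; [|split; [|split; [|split; [|split; [|split; [|split]]]]]]]]]]]]].
  - intros y z. apply to_ft_lim1. exact (proj1 (Pxy z) y).
  - intros x z. apply to_ft_lim1. exact (proj1 (Pyx z) x).
  - intros x y. apply to_ft_lim1. exact (proj1 (Pzx y) x).
  - apply (to_md2 Axy (KA Cc k1)). intros c b. exact (proj1 (proj2 (Pxy c)) b).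
  - apply (to_md2 Ayx (KA Cc k2)). intros c b. exact (proj1 (proj2 (Pyx c)) b).
  - apply (to_md2 Azx (KA Cc k3)). intros c b. exact (proj1 (proj2 (Pzx c)) b).
  - intros z. apply to_ft_lim2. exact (proj1 (proj2 (proj2 (Pxy z)))).
  - intros y. apply to_ft_lim2. exact (proj1 (proj2 (proj2 (Pxz y)))).
  - intros x. apply to_ft_lim2. exact (proj1 (proj2 (proj2 (Pyz x)))).
  - apply (to_md1 Fxy (KA Cc k1 * PI)). intros c Hc. exact (proj2 (proj2 (proj2 (proj2 (Pxy c)))) Hc).
  - apply (to_md1 Fxz (KA Cc k1 * PI)). intros c Hc. exact (proj2 (proj2 (proj2 (proj2 (Pxz c)))) Hc).
  - apply (to_md1 Fyz (KA Cc k2 * PI)). intros c Hc. exact (proj2 (proj2 (proj2 (proj2 (Pyz c)))) Hc).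
  - intros z. split.
    + exact (proj1 (proj2 (proj2 (proj2 (Pxy z))))).
    + rewrite <- V1. exact (proj1 (proj2 (proj2 (proj2 (Pyx z))))).
  - intros y. split.
    + replace (fun z => Axy z y) with (fun z => Axz y z) by (apply functional_extensionality; intros; apply U1).
      exact (proj1 (proj2 (proj2 (proj2 (Pxz y))))).
    + rewrite <- V2. exact (proj1 (proj2 (proj2 (proj2 (Pzx y))))).
  - intros x. split.
    + replace (fun z => Ayx z x) with (fun z => Ayz x z) by (apply functional_extensionality; intros; apply U2).
      exact (proj1 (proj2 (proj2 (proj2 (Pyz x))))).
    + rewrite <- V3. replace (fun y => Azx y x) with (fun y => Azy x y) by (apply functional_extensionality; intros; apply U3).
      exact (proj1 (proj2 (proj2 (proj2 (Pzy x))))).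
Qed.
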